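(* Let $D>0$, $\eta>0$, $T>0$, let $p^0$ be a smooth $\Omega$-periodic function with $0<m_p\le p^0\le M_p$, and let $(\phi,p)$, $\phi\ge0$, $p\ge0$, be the exact solution of the periodic system $$\partial_t\phi=\frac{D}{4}\nabla\cdot\Big(\nabla\phi-\frac{2\phi}{p+p^0}\nabla(p+p^0)\Big)-(p+p^0)\phi,\qquad \partial_t p=\eta D\Delta p+(p+p^0)\phi-p$$ on $\Omega\times[0,T]$ with $\phi\in C^3([0,T];C^4_{per}(\Omega))$, $p\in C^3([0,T];C^5_{per}(\Omega))$. For $\tau>0$, $t_k=k\tau$, define the local truncation errors $R_\phi^k,R_p^k\in X$ by $$R_\phi^0=\frac{\phi_h(\tau)-\phi_h(0)}{\tau}-\frac D4\Delta_h\phi_h(\tau)+\frac D2\nabla_h\cdot\Big(\frac{\phi_h(0)}{p_h(0)+p^0}\nabla_h(p_h(0)+p^0)\Big)+(p_h(0)+p^0)\phi_h(0),$$ $$R_p^0=\frac{p_h(\tau)-p_h(0)}{\tau}-\eta D\Delta_hp_h(\tau)-(p_h(0)+p^0)\phi_h(0)+p_h(0),$$ and for $k\ge1$ $$R_\phi^k=\frac{\phi_h(t_{k+1})-\phi_h(t_k)}{\tau}-\frac D8\Delta_h(\phi_h(t_{k+1})+\phi_h(t_k))+\frac{3D}{4}\nabla_h\cdot\Big(\frac{\phi_h(t_k)}{p_h(t_k)+p^0}\nabla_h(p_h(t_k)+p^0)\Big)-\frac D4\nabla_h\cdot\Big(\frac{\phi_h(t_{k-1})}{p_h(t_{k-1})+p^0}\nabla_h(p_h(t_{k-1})+p^0)\Big)+\frac32(p_h(t_k)+p^0)\phi_h(t_k)-\frac12(p_h(t_{k-1})+p^0)\phi_h(t_{k-1}),$$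 $$R_p^k=\frac{p_h(t_{k+1})-p_h(t_k)}{\tau}-\frac{\eta D}{2}\Delta_h(p_h(t_{k+1})+p_h(t_k))-\frac32\big((p_h(t_k)+p^0)\phi_h(t_k)-p_h(t_k)\big)+\frac12\big((p_h(t_{k-1})+p^0)\phi_h(t_{k-1})-p_h(t_{k-1})\big).$$ Then for $0\le k\le T/\tau-1$, $$\|R_\phi^{k+1}\|_{L^2}+\|R_p^{k+1}\|_{H^1}\le C(\tau^2+h^2),\qquad \|R_\phi^0\|_{L^2}+\|R_p^0\|_{H^1}\le C(\tau+h^2),$$ where $C$ is independent of $\tau$, $h$ and $k$.
   Context: Grid: $\Omega$ is a square of side $L$; $h=L/N$, grid points $(x_i,y_j)=(a_{\min}+ih,b_{\min}+jh)$; $X$ is the space of periodic grid functions. For a continuous function $u$, $u_h(t)\in X$ is its grid restriction at time $t$; $p^0$ also denotes its grid restriction. $(D_xu)_{i+1/2,j}=(u_{i+1,j}-u_{i,j})/h$, $(D_yu)_{i,j+1/2}=(u_{i,j+1}-u_{i,j})/h$; for face-centred $f$, $(d_xf)_{i,j}=(f_{i+1/2,j}-f_{i-1/2,j})/h$, similarly $d_y$. $\nabla_hu=(D_xu,D_yu)$, $\nabla_h\cdot(f^x,f^y)=d_xf^x+d_yf^y$, $\Delta_h=\nabla_h\cdot\nabla_h$. For grid functions $w,v$, $\nabla_h\cdot(w\nabla_hv)=d_x(\bar wD_xv)+d_y(\bar wD_yv)$ with $\bar w$ the face-centred value of $w$ (averages of neighbouring nodal values). $\langle u,v\rangle=h^2\sum_{i,j=1}^Nu_{i,j}v_{i,j}$,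 $\|u\|_{L^2}^2=\langle u,u\rangle$, $\|u\|_{H^1}^2=\|u\|_{L^2}^2+\|\nabla_hu\|_{L^2}^2$ with $\|\nabla_hu\|_{L^2}^2=h^2\sum(|D_xu|^2+|D_yu|^2)$. $C^m_{per}(\Omega)$: $C^m$ functions with all derivatives of order $\le m$ periodic. *)

(* Defs.v *)
From Stdlib Require Import Reals ZArith Lra.
From Coquelicot Require Import Coquelicot.
Open Scope R_scope.

Definition fun3 := R -> R -> R -> R.

Definition dT (f : fun3) : fun3 := fun t x y => Derive (fun s => f s x y) t.
Definition dX (f : fun3) : fun3 := fun t x y => Derive (fun s => f t s y) x.
Definition dY (f : fun3) : fun3 := fun t x y => Derive (fun s => f t x s) y.

Fixpoint iter_op (op : fun3 -> fun3) (n : nat) (f : fun3) : fun3 :=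
  match n with O => f | S n' => op (iter_op op n' f) end.

Definition mixed (i j l : nat) (f : fun3) : fun3 :=
  iter_op dT i (iter_op dX j (iter_op dY l f)).

Definition uncurry3 (f : fun3) : R * R * R -> R :=
  fun z => f (fst (fst z)) (snd (fst z)) (snd z).

(* f has all mixed partials d_t^i d_x^j d_y^l, i <= a, j + l <= m, existing
   and jointly continuous (C^a in time with values in C^m in space). *)
Definition regular (a m : nat) (f : fun3) : Prop :=
  (forall l t x y, (l < m)%nat -> ex_derive (fun s => iter_op dY l f t x s) y) /\
  (forall j l t x y, (j + l < m)%nat ->
      ex_derive (fun s => iter_op dX j (iter_op dY l f) t s y) x) /\
  (forall i j l t x y, (i < a)%nat -> (j + l <= m)%nat ->
      ex_derive (fun s => mixed i j l f s x y) t) /\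
  (forall i j l t x y, (i <= a)%nat -> (j + l <= m)%nat ->
      continuous (uncurry3 (mixed i j l f)) (t, x, y)).

Definition periodic3 (L : R) (f : fun3) : Prop :=
  forall t x y, f t (x + L) y = f t x y /\ f t x (y + L) = f t x y.

Definition smooth_per2 (L : R) (g : R -> R -> R) : Prop :=
  (forall m, regular 0 m (fun _ x y => g x y)) /\
  periodic3 L (fun _ x y => g x y).

Definition solves_system (D eta T amin bmin L : R) (p0 : R -> R -> R)
  (phi p : fun3) : Prop :=
  let q : fun3 := fun t x y => p t x y + p0 x y in
  let fx : fun3 := fun t x y => dX phi t x y - 2 * phi t x y / q t x y * dX q t x y in
  let fy : fun3 := fun t x y => dY phi t x y - 2 * phi t x y / q t x y * dY q t x y in
  forall t x y, 0 <= t <= T -> amin <= x <= amin + L -> bmin <= y <= bmin + L ->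
    dT phi t x y = D / 4 * (dX fx t x y + dY fy t x y) - q t x y * phi t x y /\
    dT p t x y = eta * D * (dX (dX p) t x y + dY (dY p) t x y)
                 + q t x y * phi t x y - p t x y.

(* A periodic grid function is a map Z -> Z -> R; face-centred values at
   (i+1/2, j) (resp. (i, j+1/2)) are stored at index (i, j). *)
Definition grid := Z -> Z -> R.

Definition restr (amin bmin h : R) (u : R -> R -> R) : grid :=
  fun i j => u (amin + IZR i * h) (bmin + IZR j * h).

Definition Dxg (h : R) (u : grid) : grid := fun i j => (u (i + 1)%Z j - u i j) / h.
Definition Dyg (h : R) (u : grid) : grid := fun i j => (u i (j + 1)%Z - u i j) / h.
Definition dxg (h : R) (f : grid) : grid := fun i j => (f i j - f (i - 1)%Z j) / h.
Definition dyg (h : R) (f : grid) : grid := fun i j => (f i j - f i (j - 1)%Z) / h.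
Definition avgx (w : grid) : grid := fun i j => (w i j + w (i + 1)%Z j) / 2.
Definition avgy (w : grid) : grid := fun i j => (w i j + w i (j + 1)%Z) / 2.

Definition lap (h : R) (u : grid) : grid :=
  fun i j => dxg h (Dxg h u) i j + dyg h (Dyg h u) i j.

Definition divwgrad (h : R) (w v : grid) : grid :=
  fun i j => dxg h (fun a b => avgx w a b * Dxg h v a b) i j
           + dyg h (fun a b => avgy w a b * Dyg h v a b) i j.

(* sumN n f = f 1 + ... + f n *)
Fixpoint sumN (n : nat) (f : nat -> R) : R :=
  match n with O => 0 | S n' => sumN n' f + f (S n') end.

Definition gsum (N : nat) (u : grid) : R :=
  sumN N (fun a => sumN N (fun b => u (Z.of_nat a) (Z.of_nat b))).

Definition inner (N : nat) (h : R) (u v : grid) : R :=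
  h ^ 2 * gsum N (fun i j => u i j * v i j).
Definition normL2 (N : nat) (h : R) (u : grid) : R := sqrt (inner N h u u).
Definition gradsq (N : nat) (h : R) (u : grid) : R :=
  h ^ 2 * gsum N (fun i j => (Dxg h u i j) ^ 2 + (Dyg h u i j) ^ 2).
Definition normH1 (N : nat) (h : R) (u : grid) : R :=
  sqrt (inner N h u u + gradsq N h u).

Section Trunc.
Variables (D eta amin bmin h tau : R) (p0 : R -> R -> R) (phi p : fun3).

Definition Phh (t : R) : grid := restr amin bmin h (fun x y => phi t x y).
Definition Ph (t : R) : grid := restr amin bmin h (fun x y => p t x y).
Definition P0h : grid := restr amin bmin h p0.
Definition Vh (t : R) : grid := fun i j => Ph t i j + P0h i j.
Definition Wh (t : R) : grid := fun i j => Phh t i j / Vh t i j.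
Definition tk (k : nat) : R := INR k * tau.

Definition Rphi0 : grid := fun i j =>
  (Phh tau i j - Phh 0 i j) / tau - D / 4 * lap h (Phh tau) i j
  + D / 2 * divwgrad h (Wh 0) (Vh 0) i j + Vh 0 i j * Phh 0 i j.

Definition Rp0 : grid := fun i j =>
  (Ph tau i j - Ph 0 i j) / tau - eta * D * lap h (Ph tau) i j
  - Vh 0 i j * Phh 0 i j + Ph 0 i j.

(* for k >= 1 *)
Definition Rphik (k : nat) : grid := fun i j =>
  (Phh (tk (k + 1)) i j - Phh (tk k) i j) / tau
  - D / 8 * lap h (fun a b => Phh (tk (k + 1)) a b + Phh (tk k) a b) i j
  + 3 * D / 4 * divwgrad h (Wh (tk k)) (Vh (tk k)) i j
  - D / 4 * divwgrad h (Wh (tk (k - 1))) (Vh (tk (k - 1))) i j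
  + 3 / 2 * (Vh (tk k) i j * Phh (tk k) i j)
  - 1 / 2 * (Vh (tk (k - 1)) i j * Phh (tk (k - 1)) i j).

Definition Rpk (k : nat) : grid := fun i j =>
  (Ph (tk (k + 1)) i j - Ph (tk k) i j) / tau
  - eta * D / 2 * lap h (fun a b => Ph (tk (k + 1)) a b + Ph (tk k) a b) i j
  - 3 / 2 * (Vh (tk k) i j * Phh (tk k) i j - Ph (tk k) i j)
  + 1 / 2 * (Vh (tk (k - 1)) i j * Phh (tk (k - 1)) i j - Ph (tk (k - 1)) i j).
End Trunc.

(* Main.v *)
Require Import Defs.
From Stdlib Require Import Reals ZArith Lra Lia.
From Coquelicot Require Import Coquelicot.
Open Scope R_scope.

Lemma fact_pos n : 0 < INR (Factorial.fact n).
Proof. apply lt_0_INR, Factorial.lt_O_fact. Qed.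

Lemma taylor_pos (u : R -> R) (n : nat) (x y M : R) :
  x < y ->
  (forall k z, (k <= S n)%nat -> ex_derive_n u k z) ->
  (forall z, x <= z <= y -> Rabs (Derive_n u (S n) z) <= M) ->
  Rabs (u y - sum_f_R0 (fun m => (y - x)^m / INR (Factorial.fact m) * Derive_n u m x) n)
   <= (y - x)^(S n) / INR (Factorial.fact (S n)) * M.
Proof.
  intros Hxy Hex HM.
  destruct (Taylor_Lagrange u n x y Hxy (fun t _ k Hk => Hex k t Hk)) as [z [Hz ->]].
  replace (_ + _ - _) with ((y - x) ^ S n / INR (Factorial.fact (S n)) * Derive_n u (S n) z) by ring.
  rewrite Rabs_mult, (Rabs_right (_ / _)).
  - apply Rmult_le_compat_l.
    + left; apply Rdiv_lt_0_compat; [apply pow_lt; lra | apply fact_pos].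
    + apply HM; lra.
  - left; apply Rdiv_lt_0_compat; [apply pow_lt; lra | apply fact_pos].
Qed.

Lemma ex_derive_n_opp_all (u : R -> R) n :
  (forall k z, (k <= n)%nat -> ex_derive_n u k z) ->
  forall k z, (k <= n)%nat -> ex_derive_n (fun s => u (- s)) k z.
Proof.
  intros H k z Hk. apply ex_derive_n_comp_opp.
  apply filter_forall. intros w j Hj. apply H. lia.
Qed.

Lemma Derive_n_opp_all (u : R -> R) n :
  (forall k z, (k <= n)%nat -> ex_derive_n u k z) ->
  forall k z, (k <= n)%nat -> Derive_n (fun s => u (- s)) k z = (-1)^k * Derive_n u k (- z).
Proof.
  intros H k z Hk. apply Derive_n_comp_opp.
  apply filter_forall. intros w j Hj. apply H. lia.
Qed.

Lemma taylor_bd (u : R -> R) (n : nat) (x y M : R) :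
  x <> y ->
  (forall k z, (k <= S n)%nat -> ex_derive_n u k z) ->
  (forall z, Rmin x y <= z <= Rmax x y -> Rabs (Derive_n u (S n) z) <= M) ->
  Rabs (u y - sum_f_R0 (fun m => (y - x)^m / INR (Factorial.fact m) * Derive_n u m x) n)
   <= Rabs (y - x)^(S n) / INR (Factorial.fact (S n)) * M.
Proof.
  intros Hne Hex HM.
  destruct (Rlt_or_le x y) as [Hlt|Hle].
  - rewrite (Rabs_right (y - x)) by lra. apply taylor_pos; auto.
    intros z Hz; apply HM. rewrite Rmin_left, Rmax_right; lra.
  - assert (Hlt : y < x) by lra.
    set (g := fun s => u (- s)).
    assert (Hg := taylor_pos g n (-x) (-y) M ltac:(lra) (ex_derive_n_opp_all u (S n) Hex)).
    assert (Hsum : sum_f_R0 (fun m => (- y - - x) ^ m / INR (Factorial.fact m) * Derive_n g m (- x)) n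
             = sum_f_R0 (fun m => (y - x) ^ m / INR (Factorial.fact m) * Derive_n u m x) n).
    { apply sum_eq. intros m Hm. unfold g. rewrite Derive_n_opp_all with (n := S n) by (auto; lia).
      rewrite Ropp_involutive.
      replace (- y - - x) with ((-1) * (y - x)) by ring. rewrite Rpow_mult_distr.
      assert (Ha : (-1)^m * (-1)^m = 1).
      { rewrite <- Rpow_mult_distr. replace (-1 * -1) with 1 by ring. now rewrite pow1. }
      transitivity (((-1)^m * (-1)^m) * ((y - x) ^ m / INR (Factorial.fact m) * Derive_n u m x)); [unfold Rdiv; ring|].
      rewrite Ha; ring. }
    rewrite Hsum in Hg. replace (u y) with (g (- y)) by (unfold g; now rewrite Ropp_involutive).
    rewrite (Rabs_left (y - x)) by lra. replace (- (y - x)) with (- y - - x) by ring.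
    apply Hg. intros z Hz. unfold g. rewrite Derive_n_opp_all with (n := S n) by auto.
    rewrite Rabs_mult, pow_1_abs, Rmult_1_l. apply HM.
    rewrite Rmin_right, Rmax_left; lra.
Qed.

Definition exn (u : R -> R) (n : nat) := forall k z, (k <= n)%nat -> ex_derive_n u k z.

Lemma tay1 u x y M : x <> y -> exn u 1 ->
  (forall z, Rmin x y <= z <= Rmax x y -> Rabs (Derive_n u 1 z) <= M) ->
  Rabs (u y - u x) <= Rabs (y - x) * M.
Proof.
  intros H1 H2 H3. pose proof (taylor_bd u 0 x y M H1 H2 H3) as H.
  simpl in H. replace (u y - u x) with (u y - (1 / 1 * u x)) by field.
  replace (Rabs (y - x) * M) with (Rabs (y - x) * 1 / 1 * M) by field. exact H.
Qed.

Ltac finish_tay H :=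
  simpl in H;
  eapply Rle_trans; [| eapply Rle_trans; [exact H |]];
  [apply Req_le; f_equal; field | apply Req_le; field].

Ltac finish_tay' u x H :=
  cbn [sum_f_R0 Factorial.fact Nat.mul Nat.add INR pow] in H;
  change (Derive_n u 0 x) with (u x) in H;
  eapply Rle_trans; [| eapply Rle_trans; [exact H |]];
  [apply Req_le; f_equal; field | apply Req_le; field].

Lemma tay2 u x y M : x <> y -> exn u 2 ->
  (forall z, Rmin x y <= z <= Rmax x y -> Rabs (Derive_n u 2 z) <= M) ->
  Rabs (u y - u x - (y - x) * Derive_n u 1 x) <= Rabs (y - x)^2 / 2 * M.
Proof.
  intros H1 H2 H3. pose proof (taylor_bd u 1 x y M H1 H2 H3) as H. finish_tay' u x H.
Qed.

Lemma tay3 u x y M : x <> y -> exn u 3 ->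
  (forall z, Rmin x y <= z <= Rmax x y -> Rabs (Derive_n u 3 z) <= M) ->
  Rabs (u y - u x - (y - x) * Derive_n u 1 x - (y - x)^2 / 2 * Derive_n u 2 x)
  <= Rabs (y - x)^3 / 6 * M.
Proof.
  intros H1 H2 H3. pose proof (taylor_bd u 2 x y M H1 H2 H3) as H. finish_tay' u x H.
Qed.

Lemma tay4 u x y M : x <> y -> exn u 4 ->
  (forall z, Rmin x y <= z <= Rmax x y -> Rabs (Derive_n u 4 z) <= M) ->
  Rabs (u y - u x - (y - x) * Derive_n u 1 x - (y - x)^2 / 2 * Derive_n u 2 x
        - (y - x)^3 / 6 * Derive_n u 3 x)
  <= Rabs (y - x)^4 / 24 * M.
Proof.
  intros H1 H2 H3. pose proof (taylor_bd u 3 x y M H1 H2 H3) as H. finish_tay' u x H.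
Qed.

Lemma Rabs_le_div (a A d : R) : 0 < d -> Rabs a <= A * d -> Rabs (a / d) <= A.
Proof.
  intros Hd H. unfold Rdiv. rewrite Rabs_mult, Rabs_inv, (Rabs_right d) by lra.
  apply Rmult_le_reg_r with d; auto. field_simplify; lra.
Qed.

Lemma Rabs_tri2 a b A B : Rabs a <= A -> Rabs b <= B -> Rabs (a + b) <= A + B.
Proof. intros. eapply Rle_trans; [apply Rabs_triang|lra]. Qed.

Lemma Rabs_h_pow (h : R) n : 0 < h -> Rabs h ^ n = h ^ n.
Proof. intros. now rewrite Rabs_right by lra. Qed.

Lemma stencil_c2 u x h M : 0 < h -> exn u 4 ->
  (forall z, x - h <= z <= x + h -> Rabs (Derive_n u 4 z) <= M) ->
  Rabs ((u (x + h) - 2 * u x + u (x - h)) / h ^ 2 - Derive_n u 2 x) <= h ^ 2 / 12 * M.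
Proof.
  intros Hh Hex HM.
  assert (E1 := tay4 u x (x + h) M ltac:(lra) Hex).
  assert (E2 := tay4 u x (x - h) M ltac:(lra) Hex).
  lapply E1; [clear E1; intro E1|intros z Hz; apply HM; revert Hz; unfold Rmin, Rmax; repeat destruct Rle_dec; lra].
  lapply E2; [clear E2; intro E2|intros z Hz; apply HM; revert Hz; unfold Rmin, Rmax; repeat destruct Rle_dec; lra].
  replace (x + h - x) with h in E1 by ring. replace (x - h - x) with (- h) in E2 by ring.
  rewrite Rabs_Ropp in E2. rewrite Rabs_h_pow in E1, E2 by lra.
  replace ((u (x + h) - 2 * u x + u (x - h)) / h ^ 2 - Derive_n u 2 x) with
    ((u (x + h) - u x - h * Derive_n u 1 x - h ^ 2 / 2 * Derive_n u 2 x - h ^ 3 / 6 * Derive_n u 3 x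
    + (u (x - h) - u x - - h * Derive_n u 1 x - (- h) ^ 2 / 2 * Derive_n u 2 x - (- h) ^ 3 / 6 * Derive_n u 3 x)) / h ^ 2)
    by (field; lra).
  apply Rabs_le_div; [apply pow_lt; lra|].
  eapply Rle_trans; [apply Rabs_tri2; [exact E1|exact E2]|]. apply Req_le. field.
Qed.

Lemma Dn_shift u k z : Derive_n (Derive_n u 1) k z = Derive_n u (S k) z.
Proof. rewrite Derive_n_comp. f_equal. lia. Qed.

Lemma exn_shift u n : exn u (S n) -> exn (Derive_n u 1) n.
Proof.
  intros H k z Hk. destruct k as [|k]; [exact I|].
  change (ex_derive (Derive_n (Derive_n u 1) k) z). apply ex_derive_ext with (f := Derive_n u (S k)).
  - intros t; now rewrite Dn_shift.
  - apply (H (S (S k)) z). lia.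
Qed.

Lemma exn_le u n m : (m <= n)%nat -> exn u n -> exn u m.
Proof. intros Hmn H k z Hk. apply H. lia. Qed.

Lemma bound_nonneg (f : R -> R) a b M : a <= b -> (forall z, a <= z <= b -> Rabs (f z) <= M) -> 0 <= M.
Proof. intros Hab H. specialize (H a ltac:(lra)). pose proof (Rabs_pos (f a)). lra. Qed.

Ltac mm_tac := unfold Rmin, Rmax; repeat destruct Rle_dec; lra.

(* Adams-Bashforth / Crank-Nicolson time stencil *)
Lemma stencil_ab u t tau M : 0 < tau -> exn u 3 ->
  (forall z, t - tau <= z <= t + tau -> Rabs (Derive_n u 3 z) <= M) ->
  Rabs ((u (t + tau) - u t) / tau - 3 / 2 * Derive_n u 1 t + 1 / 2 * Derive_n u 1 (t - tau))
  <= tau ^ 2 * M.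
Proof.
  intros Ht Hex HM.
  assert (M0 : 0 <= M) by (apply (bound_nonneg (Derive_n u 3) (t - tau) (t + tau) M); [lra|exact HM]).
  assert (E1 := tay3 u t (t + tau) M ltac:(lra) Hex).
  lapply E1; [clear E1; intro E1|intros z Hz; apply HM; revert Hz; mm_tac].
  assert (E2 := tay2 (Derive_n u 1) t (t - tau) M ltac:(lra) (exn_shift u 2 Hex)).
  lapply E2; [clear E2; intro E2|intros z Hz; rewrite Dn_shift; apply HM; revert Hz; mm_tac].
  rewrite Dn_shift in E2.
  replace (t + tau - t) with tau in E1 by ring. replace (t - tau - t) with (- tau) in E2 by ring.
  rewrite Rabs_Ropp in E2. rewrite Rabs_h_pow in E1, E2 by lra.
  replace ((u (t + tau) - u t) / tau - 3 / 2 * Derive_n u 1 t + 1 / 2 * Derive_n u 1 (t - tau))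
    with ((u (t + tau) - u t - tau * Derive_n u 1 t - tau ^ 2 / 2 * Derive_n u 2 t) / tau
          + (Derive_n u 1 (t - tau) - Derive_n u 1 t - - tau * Derive_n u 2 t) / 2) by (field; lra).
  eapply Rle_trans; [apply Rabs_tri2 with (A := tau ^ 2 / 6 * M) (B := tau ^ 2 / 4 * M)|].
  - apply Rabs_le_div; [lra|]. eapply Rle_trans; [exact E1|]. apply Req_le; field.
  - apply Rabs_le_div; [lra|]. eapply Rle_trans; [exact E2|]. apply Req_le; field.
  - assert (0 <= tau ^ 2 * M) by (apply Rmult_le_pos; [apply pow_le|]; lra). lra.
Qed.

Lemma stencil_dd u t tau M : 0 < tau -> exn u 2 ->
  (forall z, t - tau <= z <= t + tau -> Rabs (Derive_n u 2 z) <= M) ->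
  Rabs (u (t + tau) - 2 * u t + u (t - tau)) <= tau ^ 2 * M.
Proof.
  intros Ht Hex HM.
  assert (E1 := tay2 u t (t + tau) M ltac:(lra) Hex).
  lapply E1; [clear E1; intro E1|intros z Hz; apply HM; revert Hz; mm_tac].
  assert (E2 := tay2 u t (t - tau) M ltac:(lra) Hex).
  lapply E2; [clear E2; intro E2|intros z Hz; apply HM; revert Hz; mm_tac].
  replace (t + tau - t) with tau in E1 by ring. replace (t - tau - t) with (- tau) in E2 by ring.
  rewrite Rabs_Ropp in E2. rewrite Rabs_h_pow in E1, E2 by lra.
  replace (u (t + tau) - 2 * u t + u (t - tau)) with
    ((u (t + tau) - u t - tau * Derive_n u 1 t) + (u (t - tau) - u t - - tau * Derive_n u 1 t)) by ring.
  eapply Rle_trans; [apply Rabs_tri2; [exact E1|exact E2]|]. apply Req_le; field.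
Qed.

Lemma stencil_fo u t tau M : 0 < tau -> exn u 2 ->
  (forall z, t <= z <= t + tau -> Rabs (Derive_n u 2 z) <= M) ->
  Rabs ((u (t + tau) - u t) / tau - Derive_n u 1 t) <= tau / 2 * M.
Proof.
  intros Ht Hex HM.
  assert (E1 := tay2 u t (t + tau) M ltac:(lra) Hex).
  lapply E1; [clear E1; intro E1|intros z Hz; apply HM; revert Hz; mm_tac].
  replace (t + tau - t) with tau in E1 by ring. rewrite Rabs_h_pow in E1 by lra.
  replace ((u (t + tau) - u t) / tau - Derive_n u 1 t) with ((u (t + tau) - u t - tau * Derive_n u 1 t) / tau) by (field; lra).
  apply Rabs_le_div; [lra|]. eapply Rle_trans; [exact E1|]. apply Req_le; field.
Qed.

Lemma stencil_lip u x y M : exn u 1 ->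
  (forall z, Rmin x y <= z <= Rmax x y -> Rabs (Derive_n u 1 z) <= M) ->
  Rabs (u y - u x) <= Rabs (y - x) * M.
Proof.
  intros Hex HM. destruct (Req_dec x y) as [->|Hne].
  - replace (y - y) with 0 by ring. replace (u y - u y) with 0 by ring. rewrite Rabs_R0.
    assert (0 <= M) by (apply (bound_nonneg (Derive_n u 1) (Rmin y y) (Rmax y y) M); [mm_tac|exact HM]). lra.
  - now apply tay1.
Qed.

Lemma Rabs_mul_le a b A B : Rabs a <= A -> Rabs b <= B -> Rabs (a * b) <= A * B.
Proof.
  intros Ha Hb. rewrite Rabs_mult. apply Rmult_le_compat; auto; apply Rabs_pos.
Qed.

Lemma Rabs_mul_div_le a b d A B : 0 < d -> Rabs a <= A -> Rabs b <= B -> Rabs (a * b / d) <= A * B / d.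
Proof.
  intros Hd Ha Hb. apply Rabs_le_div; auto. eapply Rle_trans; [apply Rabs_mul_le; eauto|].
  right; field; lra.
Qed.

Lemma stencil_flux w v x h L Mw Mv : 0 < h -> h <= L -> exn w 3 -> exn v 4 ->
  (forall z k, x - h <= z <= x + h -> (k <= 3)%nat -> Rabs (Derive_n w k z) <= Mw) ->
  (forall z k, x - h <= z <= x + h -> (k <= 4)%nat -> Rabs (Derive_n v k z) <= Mv) ->
  Rabs (((w x + w (x + h)) / 2 * ((v (x + h) - v x) / h)
         - (w (x - h) + w x) / 2 * ((v x - v (x - h)) / h)) / h
        - Derive (fun s => w s * Derive v s) x)
  <= h ^ 2 * (Mw * Mv * (1 + L + L ^ 2)).
Proof.
  intros Hh HL Hw Hv HMw HMv.
  assert (Mw0 : 0 <= Mw) by (pose proof (HMw x 0%nat ltac:(lra) ltac:(lia)); pose proof (Rabs_pos (Derive_n w 0 x)); lra).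
  assert (Mv0 : 0 <= Mv) by (pose proof (HMv x 0%nat ltac:(lra) ltac:(lia)); pose proof (Rabs_pos (Derive_n v 0 x)); lra).
  assert (Ew1 := tay3 w x (x + h) Mw ltac:(lra) Hw).
  lapply Ew1; [clear Ew1; intro Ew1|intros z Hz; apply HMw; [revert Hz; mm_tac|lia]].
  assert (Ew2 := tay3 w x (x - h) Mw ltac:(lra) Hw).
  lapply Ew2; [clear Ew2; intro Ew2|intros z Hz; apply HMw; [revert Hz; mm_tac|lia]].
  assert (Ev1 := tay4 v x (x + h) Mv ltac:(lra) Hv).
  lapply Ev1; [clear Ev1; intro Ev1|intros z Hz; apply HMv; [revert Hz; mm_tac|lia]].
  assert (Ev2 := tay4 v x (x - h) Mv ltac:(lra) Hv).
  lapply Ev2; [clear Ev2; intro Ev2|intros z Hz; apply HMv; [revert Hz; mm_tac|lia]].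
  replace (x + h - x) with h in Ew1, Ev1 by ring. replace (x - h - x) with (- h) in Ew2, Ev2 by ring.
  rewrite Rabs_Ropp in Ew2, Ev2. rewrite Rabs_h_pow in Ew1, Ew2, Ev1, Ev2 by lra.
  rewrite Derive_mult.
  2:{ apply (Hw 1%nat x); lia. }
  2:{ apply (Hv 2%nat x); lia. }
  set (w0 := w x) in *. set (w1 := Derive_n w 1 x) in *. set (w2 := Derive_n w 2 x) in *.
  set (v0 := v x) in *. set (v1 := Derive_n v 1 x) in *. set (v2 := Derive_n v 2 x) in *.
  set (v3 := Derive_n v 3 x) in *.
  change (Derive w x) with w1. change (Derive (Derive v) x) with v2. change (Derive v x) with v1.
  set (r1 := w (x + h) - w0 - h * w1 - h ^ 2 / 2 * w2) in *.
  set (r2 := w (x - h) - w0 - - h * w1 - (- h) ^ 2 / 2 * w2) in *.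
  set (s1 := v (x + h) - v0 - h * v1 - h ^ 2 / 2 * v2 - h ^ 3 / 6 * v3) in *.
  set (s2 := v (x - h) - v0 - - h * v1 - (- h) ^ 2 / 2 * v2 - (- h) ^ 3 / 6 * v3) in *.
  set (Wp := (w0 + w (x + h)) / 2). set (Wm := (w (x - h) + w0) / 2).
  assert (HWp : Rabs Wp <= Mw).
  { unfold Wp. apply Rabs_le_div; [lra|]. eapply Rle_trans; [apply Rabs_tri2|].
    - apply (HMw x 0%nat); [lra|lia].
    - apply (HMw (x + h) 0%nat); [lra|lia].
    - lra. }
  assert (HWm : Rabs Wm <= Mw).
  { unfold Wm. apply Rabs_le_div; [lra|]. eapply Rle_trans; [apply Rabs_tri2|].
    - apply (HMw (x - h) 0%nat); [lra|lia].
    - apply (HMw x 0%nat); [lra|lia].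
    - lra. }
  assert (Hw1 : Rabs w1 <= Mw) by (apply HMw; [lra|lia]).
  assert (Hw2 : Rabs w2 <= Mw) by (apply HMw; [lra|lia]).
  assert (Hv1 : Rabs v1 <= Mv) by (apply HMv; [lra|lia]).
  assert (Hv2 : Rabs v2 <= Mv) by (apply HMv; [lra|lia]).
  assert (Hv3 : Rabs v3 <= Mv) by (apply HMv; [lra|lia]).
  set (cL := 1 + L / 2 + L ^ 2 / 6).
  assert (Hh2 : Rabs (h / 2) <= L / 2) by (rewrite Rabs_right by lra; lra).
  assert (Hh3 : Rabs (h ^ 2 / 6) <= L ^ 2 / 6).
  { rewrite Rabs_right by (apply Rle_ge, Rmult_le_pos; [apply pow_le|]; lra).
    apply Rmult_le_compat_r; [lra|]. apply pow_incr; lra. }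
  assert (HPp : Rabs (v1 + h / 2 * v2 + h ^ 2 / 6 * v3) <= Mv * cL).
  { eapply Rle_trans; [apply Rabs_tri2; [apply Rabs_tri2|]|].
    - exact Hv1.
    - apply Rabs_mul_le; [exact Hh2|exact Hv2].
    - apply Rabs_mul_le; [exact Hh3|exact Hv3].
    - unfold cL. lra. }
  assert (HPm : Rabs (v1 - h / 2 * v2 + h ^ 2 / 6 * v3) <= Mv * cL).
  { eapply Rle_trans; [apply Rabs_tri2; [apply Rabs_tri2|]|].
    - exact Hv1.
    - rewrite Rabs_Ropp. apply Rabs_mul_le; [exact Hh2|exact Hv2].
    - apply Rabs_mul_le; [exact Hh3|exact Hv3].
    - unfold cL. lra. }
  replace ((Wp * ((v (x + h) - v0) / h) - Wm * ((v0 - v (x - h)) / h)) / h - (w1 * v1 + w0 * v2))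
    with (h ^ 2 * (w2 * v2 / 4 + w1 * v3 / 6)
          + (r1 * (v1 + h / 2 * v2 + h ^ 2 / 6 * v3) / 2 - r2 * (v1 - h / 2 * v2 + h ^ 2 / 6 * v3) / 2) / h
          + (Wp * s1 + Wm * s2) / h ^ 2)
    by (unfold Wp, Wm, r1, r2, s1, s2; field; lra).
  apply Rle_trans with (h ^ 2 * (Mw * Mv / 4 + Mw * Mv / 6) + (h ^ 2 * (Mw / 6 * (Mv * cL)))
                         + h ^ 2 * (Mw * Mv / 12)).
  - apply Rabs_tri2; [apply Rabs_tri2|].
    + rewrite Rabs_mult, Rabs_right by (apply Rle_ge, pow_le; lra).
      apply Rmult_le_compat_l; [apply pow_le; lra|]. apply Rabs_tri2.
      * apply Rabs_mul_div_le; auto; lra.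
      * apply Rabs_mul_div_le; auto; lra.
    + apply Rabs_le_div; [lra|].
      unfold Rminus. eapply Rle_trans; [apply Rabs_tri2 with (A := (h ^ 3 / 6 * Mw) * (Mv * cL) / 2) (B := (h ^ 3 / 6 * Mw) * (Mv * cL) / 2)|].
      * apply Rabs_mul_div_le; auto; lra.
      * rewrite Rabs_Ropp. apply Rabs_mul_div_le; auto; lra.
      * right. field.
    + apply Rabs_le_div; [apply pow_lt; lra|].
      eapply Rle_trans; [apply Rabs_tri2; apply Rabs_mul_le; [exact HWp|exact Ev1|exact HWm|exact Ev2]|].
      right. field.
  - assert (0 <= Mw * Mv) by (apply Rmult_le_pos; lra).
    assert (0 <= h ^ 2) by (apply pow_le; lra).
    assert (0 <= L) by lra.
    assert (Hk : Mw * Mv / 4 + Mw * Mv / 6 + Mw / 6 * (Mv * cL) + Mw * Mv / 12 <= Mw * Mv * (1 + L + L ^ 2)).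
    { unfold cL. replace (Mw / 6 * (Mv * (1 + L / 2 + L ^ 2 / 6))) with (Mw * Mv * (1 + L / 2 + L ^ 2 / 6) / 6) by field.
      nra. }
    nra.
Qed.

Definition Pb (u : R -> R) (n : nat) (z M : R) := forall k, (k <= n)%nat -> Rabs (Derive_n u k z) <= M.

Lemma Pb_nonneg u n z M : Pb u n z M -> 0 <= M.
Proof. intros H. specialize (H 0%nat ltac:(lia)). pose proof (Rabs_pos (Derive_n u 0 z)). lra. Qed.

Lemma Pb_mono u n z M M' : Pb u n z M -> M <= M' -> Pb u n z M'.
Proof. intros H HM k Hk. specialize (H k Hk). lra. Qed.

Lemma Pb_le u n m z M : (m <= n)%nat -> Pb u n z M -> Pb u m z M.
Proof. intros Hmn H k Hk. apply H. lia. Qed.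

Lemma Pb_shift u n z M : Pb u (S n) z M -> Pb (Derive_n u 1) n z M.
Proof. intros H k Hk. rewrite Dn_shift. apply H. lia. Qed.

Lemma loc_all (P : R -> Prop) x : (forall y, P y) -> locally x P.
Proof. intros H. now apply filter_forall. Qed.

Lemma exn_plus u v n : exn u n -> exn v n -> exn (fun x => u x + v x) n.
Proof.
  intros Hu Hv k z Hk. apply ex_derive_n_plus; apply loc_all; intros y j Hj; [apply Hu|apply Hv]; lia.
Qed.

Lemma Dn_plus u v n k z : exn u n -> exn v n -> (k <= n)%nat ->
  Derive_n (fun x => u x + v x) k z = Derive_n u k z + Derive_n v k z.
Proof.
  intros Hu Hv Hk. apply Derive_n_plus; apply loc_all; intros y j Hj; [apply Hu|apply Hv]; lia.
Qed.

Lemma Pb_plus u v n z A B : exn u n -> exn v n -> Pb u n z A -> Pb v n z B -> Pb (fun x => u x + v x) n z (A + B).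
Proof.
  intros Hu Hv HA HB k Hk. rewrite (Dn_plus u v n) by auto. apply Rabs_tri2; auto.
Qed.

Lemma exn_opp u n : exn u n -> exn (fun x => - u x) n.
Proof. intros H k z Hk. apply ex_derive_n_opp. auto. Qed.

Lemma Pb_opp u n z A : Pb u n z A -> Pb (fun x => - u x) n z A.
Proof. intros H k Hk. rewrite Derive_n_opp, Rabs_Ropp. auto. Qed.

Lemma Dn_deriv_ext f g k z : (forall x, is_derive f x (g x)) -> Derive_n f (S k) z = Derive_n g k z.
Proof.
  intros H. rewrite <- Dn_shift. apply Derive_n_ext. intros t. simpl.
  apply is_derive_unique. apply H.
Qed.

Lemma exn_deriv_ext f g n : (forall x, is_derive f x (g x)) -> exn g n -> exn f (S n).
Proof.
  intros H Hg k z Hk. destruct k as [|k]; [exact I|].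
  destruct k as [|k].
  - simpl. exists (g z). apply H.
  - change (ex_derive (Derive_n f (S k)) z).
    apply ex_derive_ext with (f := Derive_n g k).
    + intros t. now rewrite (Dn_deriv_ext f g k t H).
    + apply (Hg (S k) z). lia.
Qed.

Lemma Pb_deriv_ext f g n z M : (forall x, is_derive f x (g x)) -> Rabs (f z) <= M -> Pb g n z M -> Pb f (S n) z M.
Proof.
  intros H H0 Hg k Hk. destruct k as [|k]; [exact H0|].
  rewrite (Dn_deriv_ext f g k z H). apply Hg. lia.
Qed.

Lemma exn_is_derive u n x : exn u (S n) -> is_derive u x (Derive_n u 1 x).
Proof. intros H. apply Derive_correct. apply (H 1%nat x). lia. Qed.

Lemma mult_prop n : forall u v, exn u n -> exn v n ->
  exn (fun x => u x * v x) n /\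
  forall z A B, Pb u n z A -> Pb v n z B -> Pb (fun x => u x * v x) n z (2 ^ n * A * B).
Proof.
  induction n as [|n IH]; intros u v Hu Hv.
  - split.
    + intros k z Hk. replace k with 0%nat by lia. exact I.
    + intros z A B HA HB k Hk. replace k with 0%nat by lia. simpl.
      rewrite Rmult_1_l. apply Rabs_mul_le; [apply (HA 0%nat)|apply (HB 0%nat)]; lia.
  - set (u1 := Derive_n u 1). set (v1 := Derive_n v 1).
    assert (Hd : forall x, is_derive (fun x => u x * v x) x (u1 x * v x + u x * v1 x)).
    { intros x. apply (is_derive_mult u v x (u1 x) (v1 x)); [apply exn_is_derive with n; auto| apply exn_is_derive with n; auto|].
      intros; apply Rmult_comm. }
    destruct (IH u1 v (exn_shift u n Hu) (exn_le v (S n) n ltac:(lia) Hv)) as [E1 P1].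
    destruct (IH u v1 (exn_le u (S n) n ltac:(lia) Hu) (exn_shift v n Hv)) as [E2 P2].
    split.
    + apply exn_deriv_ext with (g := fun x => u1 x * v x + u x * v1 x); auto.
      apply exn_plus; auto.
    + intros z A B HA HB.
      assert (A0 := Pb_nonneg _ _ _ _ HA). assert (B0 := Pb_nonneg _ _ _ _ HB).
      apply Pb_deriv_ext with (g := fun x => u1 x * v x + u x * v1 x); auto.
      * eapply Rle_trans; [apply Rabs_mul_le; [apply (HA 0%nat)|apply (HB 0%nat)]; lia|].
        assert (1 <= 2 ^ S n) by (apply pow_R1_Rle; lra).
        assert (0 <= A * B) by nra. nra.
      * replace (2 ^ S n * A * B) with (2 ^ n * A * B + 2 ^ n * A * B) by (simpl; ring).
        apply Pb_plus; auto.
        -- apply P1; [apply Pb_shift; auto|apply Pb_le with (S n); auto].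
        -- apply P2; [apply Pb_le with (S n); auto|apply Pb_shift; auto].
Qed.

Fixpoint Kinv (n : nat) (m A : R) : R :=
  match n with
  | O => / m
  | S n => Rmax (/ m) (2 ^ n * A * (2 ^ n * Kinv n m A * Kinv n m A))
  end.

Lemma inv_prop n m : 0 < m -> forall q, exn q n -> (forall x, m <= q x) ->
  exn (fun x => / q x) n /\
  forall z A, Pb q n z A -> Pb (fun x => / q x) n z (Kinv n m A).
Proof.
  intros Hm. induction n as [|n IH]; intros q Hq Hmq.
  - split.
    + intros k z Hk. replace k with 0%nat by lia. exact I.
    + intros z A HA k Hk. replace k with 0%nat by lia. simpl.
      specialize (Hmq z). rewrite Rabs_right.
      * apply Rinv_le_contravar; lra.
      * left; apply Rinv_0_lt_compat; lra.
  - destruct (IH q (exn_le q (S n) n ltac:(lia) Hq) Hmq) as [Ei Pi].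
    destruct (mult_prop n _ _ Ei Ei) as [Eii Pii].
    set (q1 := Derive_n q 1).
    destruct (mult_prop n (fun x => - q1 x) _ (exn_opp _ _ (exn_shift q n Hq)) Eii) as [Eg Pg].
    assert (Hd : forall x, is_derive (fun x => / q x) x (- q1 x * (/ q x * / q x))).
    { intros x. eapply is_derive_ext_loc.
      - apply loc_all. intros y. reflexivity.
      - replace (- q1 x * (/ q x * / q x)) with (- q1 x / q x ^ 2).
        + apply is_derive_inv; [apply exn_is_derive with n; auto|]. specialize (Hmq x). lra.
        + field. specialize (Hmq x). lra. }
    split.
    + apply exn_deriv_ext with (g := fun x => - q1 x * (/ q x * / q x)); auto.
    + intros z A HA. simpl Kinv.
      apply Pb_deriv_ext with (g := fun x => - q1 x * (/ q x * / q x)); auto.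
      * eapply Rle_trans; [|apply Rmax_l].
        specialize (Hmq z). rewrite Rabs_right.
        -- apply Rinv_le_contravar; lra.
        -- left; apply Rinv_0_lt_compat; lra.
      * eapply Pb_mono; [|apply Rmax_r].
        apply Pg.
        -- apply Pb_opp. apply Pb_shift. auto.
        -- apply Pii; apply Pi; apply Pb_le with (S n); auto.
Qed.

Lemma cont3_eps (g : fun3) t x y : continuous (uncurry3 g) (t, x, y) ->
  forall eps, 0 < eps -> exists d, 0 < d /\ forall t' x' y', Rabs (t' - t) < d -> Rabs (x' - x) < d ->
    Rabs (y' - y) < d -> Rabs (g t' x' y' - g t x y) < eps.
Proof.
  intros Hc eps Heps.
  destruct (proj1 (filterlim_locally _ _) Hc (mkposreal eps Heps)) as [d Hd].
  exists (pos d). split; [apply cond_pos|]. intros t' x' y' H1 H2 H3.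
  specialize (Hd (t', x', y')). simpl in Hd. apply Hd.
  repeat split; assumption.
Qed.

Fixpoint lmax (G : Compactness.Tn 3 R -> R) (l : list (Compactness.Tn 3 R)) : R :=
  match l with nil => 0 | cons a l => Rmax (Rabs (G a) + 1) (lmax G l) end.

Lemma lmax_in G l a : List.In a l -> Rabs (G a) + 1 <= lmax G l.
Proof.
  induction l as [|b l IH]; simpl; [tauto|]. intros [->|H].
  - apply Rmax_l.
  - eapply Rle_trans; [apply IH; auto|apply Rmax_r].
Qed.

From Stdlib Require Import Classical ClassicalEpsilon.

Lemma bound3 (g : fun3) a1 b1 a2 b2 a3 b3 : (forall t x y, continuous (uncurry3 g) (t, x, y)) ->
  exists M, forall t x y, a1 <= t <= b1 -> a2 <= x <= b2 -> a3 <= y <= b3 -> Rabs (g t x y) <= M.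
Proof.
  intros Hc.
  set (G := fun z : Compactness.Tn 3 R => match z with (t, (x, (y, _))) => g t x y end).
  assert (Hd : forall z : Compactness.Tn 3 R, exists d : posreal, forall w : Compactness.Tn 3 R,
     close_n 3 d w z -> Rabs (G w - G z) < 1).
  { intros [t [x [y []]]]. destruct (cont3_eps g t x y (Hc t x y) 1 ltac:(lra)) as [d [Hd0 Hd]].
    exists (mkposreal d Hd0). intros [t' [x' [y' []]]] H. simpl in H. simpl.
    apply Hd; tauto. }
  set (delta := fun z => proj1_sig (constructive_indefinite_description _ (Hd z))).
  assert (Hdelta : forall z w, close_n 3 (delta z) w z -> Rabs (G w - G z) < 1).
  { intros z. unfold delta. destruct (constructive_indefinite_description _ (Hd z)) as [d Hd']. exact Hd'. }
  pose proof (compactness_list 3 (a1, (a2, (a3, tt))) (b1, (b2, (b3, tt))) delta) as Hl.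
  apply NNPP. intros Hno. apply Hl. intros [l Hl']. apply Hno.
  exists (lmax G l). intros t x y Ht Hx Hy.
  destruct (Hl' (t, (x, (y, tt)))) as [z [Hin [_ Hcl]]].
  { simpl. tauto. }
  pose proof (Hdelta z _ Hcl) as H1. pose proof (lmax_in G l z Hin) as H2.
  change (g t x y) with (G (t, (x, (y, tt)))).
  pose proof (Rabs_triang_inv (G (t, (x, (y, tt)))) (G z)). lra.
Qed.

Lemma mvt (u : R -> R) a b : (forall z, ex_derive u z) ->
  exists c, Rmin a b <= c <= Rmax a b /\ u b - u a = Derive u c * (b - a).
Proof.
  intros H. destruct (MVT_gen u a b (Derive u)) as [c [Hc E]].
  - intros z _. apply Derive_correct, H.
  - intros z _. apply continuity_pt_filterlim. apply (ex_derive_continuous u z (H z)).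
  - exists c. split; auto.
Qed.

Lemma deriv_bound (D : R -> R) t l d K : 0 < d -> is_derive D t l ->
  (forall s, Rabs s < d -> Rabs (D (t + s) - D t) <= K * Rabs s) -> Rabs l <= K.
Proof.
  intros Hd Hl HK. apply Rnot_lt_le. intros Hlt.
  apply is_derive_Reals in Hl.
  set (e := Rabs l - K).
  destruct (Hl e ltac:(unfold e; lra)) as [d' Hd'].
  set (s := Rmin (d / 2) (d' / 2)).
  assert (Hs0 : 0 < s) by (unfold s; apply Rmin_glb_lt; [lra|destruct d'; simpl; lra]).
  assert (Hsd : s < d) by (unfold s; eapply Rle_lt_trans; [apply Rmin_l|lra]).
  assert (Hsd' : s < d') by (unfold s; eapply Rle_lt_trans; [apply Rmin_r|destruct d'; simpl; lra]).
  specialize (Hd' s ltac:(lra) ltac:(rewrite Rabs_right; lra)).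
  specialize (HK s ltac:(rewrite Rabs_right; lra)).
  rewrite (Rabs_right s) in HK by lra.
  assert (Rabs ((D (t + s) - D t) / s) <= K).
  { apply Rabs_le_div; auto. }
  pose proof (Rabs_triang_inv l ((D (t + s) - D t) / s)).
  rewrite <- Rabs_Ropp in Hd'. replace (- ((D (t + s) - D t) / s - l)) with (l - (D (t + s) - D t) / s) in Hd' by ring.
  unfold e in *. lra.
Qed.

Lemma Derive_minus_R (u v : R -> R) x : ex_derive u x -> ex_derive v x ->
  Derive (fun z => u z - v z) x = Derive u x - Derive v x.
Proof. intros; now apply Derive_minus. Qed.

Lemma Derive_plus_R (u v : R -> R) x : ex_derive u x -> ex_derive v x ->
  Derive (fun z => u z + v z) x = Derive u x + Derive v x.
Proof. intros; now apply Derive_plus. Qed.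

Lemma clairaut (f : R -> R -> R) t x :
  (forall s z, ex_derive (fun z => f s z) z) ->
  (forall s z, ex_derive (fun s => f s z) s) ->
  (forall s z, ex_derive (fun s => Derive (fun z => f s z) z) s) ->
  (forall eps, 0 < eps -> exists d, 0 < d /\ forall s z, Rabs (s - t) < d -> Rabs (z - x) < d ->
     Rabs (Derive (fun s => Derive (fun z => f s z) z) s
           - Derive (fun s => Derive (fun z => f s z) x) t) < eps) ->
  is_derive (fun z => Derive (fun s => f s z) t) x (Derive (fun s => Derive (fun z => f s z) x) t).
Proof.
  intros H1 H2 H3 H4.
  set (c := Derive (fun s => Derive (fun z => f s z) x) t).
  apply is_derive_Reals. intros eps Heps.
  destruct (H4 (eps / 2) ltac:(lra)) as [d [Hd0 Hd]].
  exists (mkposreal d Hd0). intros h Hh0 Hh. simpl in Hh.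
  set (Dl := fun s => f s (x + h) - f s x - h * c * s).
  assert (HDl : is_derive Dl t (Derive (fun s => f s (x + h)) t - Derive (fun s => f s x) t - h * c)).
  { unfold Dl. apply (is_derive_minus (fun s => f s (x + h) - f s x) (fun s => h * c * s)).
    - apply (is_derive_minus (fun s => f s (x + h)) (fun s => f s x)); apply Derive_correct; auto.
    - auto_derive; auto; ring. }
  assert (Hb : Rabs (Derive (fun s => f s (x + h)) t - Derive (fun s => f s x) t - h * c) <= eps / 2 * Rabs h).
  { apply (deriv_bound Dl t _ d (eps / 2 * Rabs h) Hd0 HDl).
    intros s Hs.
    destruct (mvt (fun z => f (t + s) z - f t z) x (x + h)) as [c1 [Hc1 E1]].
    { intros z. apply (ex_derive_minus (fun z => f (t + s) z) (fun z => f t z)); auto. }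
    rewrite (Derive_minus_R (fun z => f (t + s) z) (fun z => f t z)) in E1 by auto.
    destruct (mvt (fun s => Derive (fun z => f s z) c1) t (t + s)) as [c2 [Hc2 E2]].
    { intros s'. auto. }
    pose proof (Rabs_def2 _ _ Hh) as [Hh1 Hh2]. pose proof (Rabs_def2 _ _ Hs) as [Hs1 Hs2].
    assert (Hc1' : Rabs (c1 - x) < d) by (revert Hc1; unfold Rmin, Rmax; repeat destruct Rle_dec; intros; apply Rabs_def1; lra).
    assert (Hc2' : Rabs (c2 - t) < d) by (revert Hc2; unfold Rmin, Rmax; repeat destruct Rle_dec; intros; apply Rabs_def1; lra).
    specialize (Hd c2 c1 Hc2' Hc1').
    replace (Dl (t + s) - Dl t) with (h * s * (Derive (fun s => Derive (fun z => f s z) c1) c2 - c)).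
    - rewrite !Rabs_mult. fold c in Hd.
      assert (0 <= Rabs h * Rabs s) by (apply Rmult_le_pos; apply Rabs_pos).
      nra.
    - unfold Dl. 
      replace (f (t + s) (x + h) - f (t + s) x - h * c * (t + s) - (f t (x + h) - f t x - h * c * t))
        with ((f (t + s) (x + h) - f t (x + h)) - (f (t + s) x - f t x) - h * c * s) by ring.
      replace ((f (t + s) (x + h) - f t (x + h)) - (f (t + s) x - f t x)) with
        ((Derive (fun z => f (t + s) z) c1 - Derive (fun z => f t z) c1) * (x + h - x)) by (rewrite <- E1; ring).
      replace (Derive (fun z => f (t + s) z) c1 - Derive (fun z => f t z) c1) with
        (Derive (fun s => Derive (fun z => f s z) c1) c2 * (t + s - t)) by (rewrite <- E2; reflexivity).
      ring. }
  replace ((Derive (fun s => f s (x + h)) t - Derive (fun s => f s x) t) / h - c)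
    with ((Derive (fun s => f s (x + h)) t - Derive (fun s => f s x) t - h * c) / h) by (field; auto).
  unfold Rdiv. rewrite Rabs_mult, Rabs_inv.
  apply Rle_lt_trans with (eps / 2 * Rabs h * / Rabs h).
  - apply Rmult_le_compat_r; [left; apply Rinv_0_lt_compat; apply Rabs_pos_lt; auto|exact Hb].
  - field_simplify; [lra|]. apply Rabs_no_R0; auto.
Qed.


Definition c2 (u : R -> R) (x h : R) := (u (x + h) - 2 * u x + u (x - h)) / h ^ 2.
Definition flux1 (w v : R -> R) (x h : R) :=
  ((w x + w (x + h)) / 2 * ((v (x + h) - v x) / h)
   - (w (x - h) + w x) / 2 * ((v x - v (x - h)) / h)) / h.

Lemma restr_xp a b h F i j : restr a b h F (i + 1)%Z j = F (a + IZR i * h + h) (b + IZR j * h).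
Proof. unfold restr. rewrite plus_IZR. f_equal. ring. Qed.
Lemma restr_xm a b h F i j : restr a b h F (i - 1)%Z j = F (a + IZR i * h - h) (b + IZR j * h).
Proof. unfold restr. rewrite minus_IZR. f_equal. ring. Qed.
Lemma restr_yp a b h F i j : restr a b h F i (j + 1)%Z = F (a + IZR i * h) (b + IZR j * h + h).
Proof. unfold restr. rewrite plus_IZR. f_equal. ring. Qed.
Lemma restr_ym a b h F i j : restr a b h F i (j - 1)%Z = F (a + IZR i * h) (b + IZR j * h - h).
Proof. unfold restr. rewrite minus_IZR. f_equal. ring. Qed.
Lemma restr_0 a b h F i j : restr a b h F i j = F (a + IZR i * h) (b + IZR j * h).
Proof. reflexivity. Qed.

Lemma lap_restr a b h F i j : h <> 0 ->
  lap h (restr a b h F) i j =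
  c2 (fun s => F s (b + IZR j * h)) (a + IZR i * h) h + c2 (fun s => F (a + IZR i * h) s) (b + IZR j * h) h.
Proof.
  intros Hh. unfold lap, dxg, Dxg, dyg, Dyg, c2.
  rewrite !Z.sub_add, restr_xp, restr_xm, restr_yp, restr_ym, !restr_0.
  field. auto.
Qed.

Lemma lap_plus h u v i j : lap h (fun a b => u a b + v a b) i j = lap h u i j + lap h v i j.
Proof. unfold lap, dxg, Dxg, dyg, Dyg. unfold Rdiv. ring. Qed.

Lemma divwgrad_restr a b h W V i j :
  divwgrad h (restr a b h W) (restr a b h V) i j =
  flux1 (fun s => W s (b + IZR j * h)) (fun s => V s (b + IZR j * h)) (a + IZR i * h) h
  + flux1 (fun s => W (a + IZR i * h) s) (fun s => V (a + IZR i * h) s) (b + IZR j * h) h.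
Proof.
  unfold divwgrad, dxg, dyg, avgx, avgy, Dxg, Dyg, flux1.
  rewrite !Z.sub_add, !restr_xp, !restr_xm, !restr_yp, !restr_ym, !restr_0.
  reflexivity.
Qed.

Lemma iterX (f : fun3) j t x y : iter_op dX j f t x y = Derive_n (fun s => f t s y) j x.
Proof.
  revert x. induction j as [|j IH]; intros x; [reflexivity|].
  simpl. unfold dX at 1. apply Derive_ext. intros s. apply IH.
Qed.

Lemma iterY (f : fun3) l t x y : iter_op dY l f t x y = Derive_n (fun s => f t x s) l y.
Proof.
  revert y. induction l as [|l IH]; intros y; [reflexivity|].
  simpl. unfold dY at 1. apply Derive_ext. intros s. apply IH.
Qed.

Lemma iterT (f : fun3) i t x y : iter_op dT i f t x y = Derive_n (fun s => f s x y) i t.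
Proof.
  revert t. induction i as [|i IH]; intros t; [reflexivity|].
  simpl. unfold dT at 1. apply Derive_ext. intros s. apply IH.
Qed.

Lemma mixedE (f : fun3) i j l t x y :
  mixed i j l f t x y = Derive_n (fun s => iter_op dX j (iter_op dY l f) s x y) i t.
Proof. unfold mixed. apply iterT. Qed.

Lemma reg_exY a m f : regular a m f -> forall t x, exn (fun s => f t x s) m.
Proof.
  intros [H1 _] t x k z Hk. destruct k as [|k]; [exact I|].
  change (ex_derive (Derive_n (fun s => f t x s) k) z).
  apply ex_derive_ext with (f := fun s => iter_op dY k f t x s).
  - intros s. apply iterY.
  - apply H1. lia.
Qed.

Lemma reg_exX a m f l : regular a m f -> (l <= m)%nat ->
  forall t y, exn (fun s => iter_op dY l f t s y) (m - l).
Proof.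
  intros [_ [H2 _]] Hl t y k z Hk. destruct k as [|k]; [exact I|].
  change (ex_derive (Derive_n (fun s => iter_op dY l f t s y) k) z).
  apply ex_derive_ext with (f := fun s => iter_op dX k (iter_op dY l f) t s y).
  - intros s. apply iterX.
  - apply H2. lia.
Qed.

Lemma reg_exT a m f j l : regular a m f -> (j + l <= m)%nat ->
  forall x y, exn (fun s => iter_op dX j (iter_op dY l f) s x y) a.
Proof.
  intros [_ [_ [H3 _]]] Hjl x y k z Hk. destruct k as [|k]; [exact I|].
  change (ex_derive (Derive_n (fun s => iter_op dX j (iter_op dY l f) s x y) k) z).
  apply ex_derive_ext with (f := fun s => mixed k j l f s x y).
  - intros s. apply mixedE.
  - apply H3; lia.
Qed.

Lemma reg_cont a m f i j l : regular a m f -> (i <= a)%nat -> (j + l <= m)%nat ->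
  forall t x y, continuous (uncurry3 (mixed i j l f)) (t, x, y).
Proof. intros [_ [_ [_ H4]]] Hi Hjl t x y. apply H4; auto. Qed.

Lemma DnX (f : fun3) j l t x y :
  Derive_n (fun s => iter_op dY l f t s y) j x = mixed 0 j l f t x y.
Proof. unfold mixed. simpl. symmetry. apply iterX. Qed.

Lemma DnY (f : fun3) l t x y : Derive_n (fun s => f t x s) l y = mixed 0 0 l f t x y.
Proof. unfold mixed. simpl. symmetry. apply iterY. Qed.

Lemma DnT (f : fun3) i j l t x y :
  Derive_n (fun s => iter_op dX j (iter_op dY l f) s x y) i t = mixed i j l f t x y.
Proof. symmetry. apply mixedE. Qed.

Lemma fin_bound (P : nat -> R -> Prop) n :
  (forall k M M', P k M -> M <= M' -> P k M') ->
  (forall k, (k <= n)%nat -> exists M, P k M) -> exists M, forall k, (k <= n)%nat -> P k M.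
Proof.
  intros Hmono H. induction n as [|n IH].
  - destruct (H 0%nat (le_n 0)) as [M HM]. exists M. intros k Hk. replace k with 0%nat by lia. auto.
  - destruct IH as [M1 HM1]; [intros k Hk; apply H; lia|].
    destruct (H (S n) (le_n _)) as [M2 HM2].
    exists (Rmax M1 M2). intros k Hk. destruct (Nat.eq_dec k (S n)) as [->|Hne].
    + eapply Hmono; [exact HM2|apply Rmax_r].
    + eapply Hmono; [apply HM1; lia|apply Rmax_l].
Qed.

Lemma mixed_bound a m f a1 b1 a2 b2 a3 b3 : regular a m f ->
  exists M, forall i j l t x y, (i <= a)%nat -> (j + l <= m)%nat ->
    a1 <= t <= b1 -> a2 <= x <= b2 -> a3 <= y <= b3 -> Rabs (mixed i j l f t x y) <= M.
Proof.
  intros Hr.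
  assert (Hm : forall i j l, exists M, (i <= a)%nat -> (j + l <= m)%nat -> forall t x y,
    a1 <= t <= b1 -> a2 <= x <= b2 -> a3 <= y <= b3 -> Rabs (mixed i j l f t x y) <= M).
  { intros i j l. destruct (le_lt_dec i a) as [Hi|Hi]; [|exists 0; intros; lia].
    destruct (le_lt_dec (j + l) m) as [Hjl|Hjl]; [|exists 0; intros; lia].
    destruct (bound3 (mixed i j l f) a1 b1 a2 b2 a3 b3 (reg_cont a m f i j l Hr Hi Hjl)) as [M HM].
    exists M. intros _ _. exact HM. }
  set (P3 := fun i j l M => (i <= a)%nat -> (j + l <= m)%nat -> forall t x y,
    a1 <= t <= b1 -> a2 <= x <= b2 -> a3 <= y <= b3 -> Rabs (mixed i j l f t x y) <= M).
  assert (Mono : forall i j l M M', P3 i j l M -> M <= M' -> P3 i j l M').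
  { unfold P3. intros i j l M M' H HM Hi Hjl t x y Ht Hx Hy. specialize (H Hi Hjl t x y Ht Hx Hy). lra. }
  destruct (fin_bound (fun i M => forall j, (j <= m)%nat -> forall l, (l <= m)%nat -> P3 i j l M) a) as [M HM].
  - intros k M M' H HM j Hj l Hl. eapply Mono; eauto.
  - intros i Hi. apply (fin_bound (fun j M => forall l, (l <= m)%nat -> P3 i j l M) m).
    + intros k M M' H HM l Hl. eapply Mono; eauto.
    + intros j Hj. apply (fin_bound (fun l M => P3 i j l M) m).
      * intros k M M' H HM. eapply Mono; eauto.
      * intros l Hl. apply Hm.
  - exists M. intros i j l t x y Hi Hjl Ht Hx Hy. apply (HM i Hi j ltac:(lia) l); auto; lia.
Qed.

Lemma exn_ex (u : R -> R) n z : exn u (S n) -> ex_derive u z.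
Proof. intros H. apply (H 1%nat z). lia. Qed.

Lemma exn_ex_k (u : R -> R) n k z : exn u n -> (k < n)%nat -> ex_derive (Derive_n u k) z.
Proof. intros H Hk. apply (H (S k) z). lia. Qed.

Lemma clair_tx a m f : regular a m f -> (1 <= a)%nat -> (1 <= m)%nat ->
  forall t x y, is_derive (fun z => dT f t z y) x (dT (dX f) t x y).
Proof.
  intros Hr Ha Hm t x y.
  apply (clairaut (fun s z => f s z y) t x).
  - intros s z. apply (exn_ex _ (m - 1) z). replace (S (m - 1)) with (m - 0)%nat by lia.
    apply (reg_exX a m f 0 Hr ltac:(lia)).
  - intros s z. apply (exn_ex _ (a - 1) s). replace (S (a - 1)) with a by lia.
    apply (reg_exT a m f 0 0 Hr ltac:(lia)).
  - intros s z. apply (exn_ex _ (a - 1) s). replace (S (a - 1)) with a by lia.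
    apply (reg_exT a m f 1 0 Hr ltac:(lia)).
  - intros eps Heps. destruct (cont3_eps _ t x y (reg_cont a m f 1 1 0 Hr Ha ltac:(lia) t x y) eps Heps) as [d [Hd HH]].
    exists d. split; auto. intros s z Hs Hz. apply (HH s z y Hs Hz). rewrite Rminus_diag, Rabs_R0. auto.
Qed.

Lemma clair_ty a m f : regular a m f -> (1 <= a)%nat -> (1 <= m)%nat ->
  forall t x y, is_derive (fun z => dT f t x z) y (dT (dY f) t x y).
Proof.
  intros Hr Ha Hm t x y.
  apply (clairaut (fun s z => f s x z) t y).
  - intros s z. apply (exn_ex _ (m - 1) z). replace (S (m - 1)) with m by lia.
    apply (reg_exY a m f Hr).
  - intros s z. apply (exn_ex _ (a - 1) s). replace (S (a - 1)) with a by lia.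
    apply (reg_exT a m f 0 0 Hr ltac:(lia)).
  - intros s z. apply (exn_ex _ (a - 1) s). replace (S (a - 1)) with a by lia.
    apply (reg_exT a m f 0 1 Hr ltac:(lia)).
  - intros eps Heps. destruct (cont3_eps _ t x y (reg_cont a m f 1 0 1 Hr Ha ltac:(lia) t x y) eps Heps) as [d [Hd HH]].
    exists d. split; auto. intros s z Hs Hz. apply (HH s x z Hs); auto. rewrite Rminus_diag, Rabs_R0. auto.
Qed.

Lemma clair_xy1 a m f : regular a m f -> (2 <= m)%nat ->
  forall t x y, is_derive (fun z => dX f t x z) y (dX (dY f) t x y).
Proof.
  intros Hr Hm t x y.
  apply (clairaut (fun s z => f t s z) x y).
  - intros s z. apply (exn_ex _ (m - 1) z). replace (S (m - 1)) with m by lia.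
    apply (reg_exY a m f Hr).
  - intros s z. apply (exn_ex _ (m - 1) s). replace (S (m - 1)) with (m - 0)%nat by lia.
    apply (reg_exX a m f 0 Hr ltac:(lia)).
  - intros s z. apply (exn_ex _ (m - 2) s). replace (S (m - 2)) with (m - 1)%nat by lia.
    apply (reg_exX a m f 1 Hr ltac:(lia)).
  - intros eps Heps. destruct (cont3_eps _ t x y (reg_cont a m f 0 1 1 Hr ltac:(lia) ltac:(lia) t x y) eps Heps) as [d [Hd HH]].
    exists d. split; auto. intros s z Hs Hz. apply (HH t s z); auto. rewrite Rminus_diag, Rabs_R0. auto.
Qed.

Lemma clair_xy2 a m f : regular a m f -> (3 <= m)%nat ->
  forall t x y, is_derive (fun z => iter_op dX 2 f t x z) y (iter_op dX 2 (iter_op dY 1 f) t x y).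
Proof.
  intros Hr Hm t x y.
  assert (E1 : forall s z, Derive (fun b => dX f t s b) z = dX (dY f) t s z).
  { intros s z. apply is_derive_unique. apply (clair_xy1 a m f Hr ltac:(lia)). }
  assert (Hc := clairaut (fun s z => dX f t s z) x y).
  change (is_derive (fun z => Derive (fun s => dX f t s z) x) y (dX (dX (dY f)) t x y)).
  replace (dX (dX (dY f)) t x y) with (Derive (fun s => Derive (fun z => dX f t s z) y) x).
  2:{ unfold dX at 1. apply Derive_ext. intros s. apply E1. }
  apply Hc.
  - intros s z. eexists. apply (clair_xy1 a m f Hr ltac:(lia)).
  - intros s z. apply ex_derive_ext with (f := fun s => Derive_n (fun s' => f t s' z) 1 s).
    + intros s'. rewrite <- iterX. reflexivity.
    + apply (exn_ex_k _ (m - 0) 1 s (reg_exX a m f 0 Hr ltac:(lia) t z)). lia.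
  - intros s z. apply ex_derive_ext with (f := fun s => Derive_n (fun s' => iter_op dY 1 f t s' z) 1 s).
    + intros s'. rewrite <- iterX. rewrite E1. reflexivity.
    + apply (exn_ex_k _ (m - 1) 1 s (reg_exX a m f 1 Hr ltac:(lia) t z)). lia.
  - intros eps Heps. destruct (cont3_eps _ t x y (reg_cont a m f 0 2 1 Hr ltac:(lia) ltac:(lia) t x y) eps Heps) as [d [Hd HH]].
    exists d. split; auto. intros s z Hs Hz.
    rewrite (Derive_ext (fun s0 => Derive (fun z0 => dX f t s0 z0) z) (fun s0 => dX (dY f) t s0 z)) by (intros; apply E1).
    rewrite (Derive_ext (fun s0 => Derive (fun z0 => dX f t s0 z0) y) (fun s0 => dX (dY f) t s0 y)) by (intros; apply E1).
    assert (Hy0 : Rabs (t - t) < d) by (rewrite Rminus_diag, Rabs_R0; auto).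
    exact (HH t s z Hy0 Hs Hz).
Qed.


Lemma mvt_bound (F F' : R -> R) a b K : (forall z, is_derive F z (F' z)) ->
  (forall z, Rmin a b <= z <= Rmax a b -> Rabs (F' z) <= K) -> Rabs (F b - F a) <= Rabs (b - a) * K.
Proof.
  intros Hd HK. destruct (MVT_gen F a b F') as [c [Hc E]].
  - intros z _. apply Hd.
  - intros z _. apply continuity_pt_filterlim. apply (ex_derive_continuous F z). eexists; apply Hd.
  - rewrite E, Rabs_mult, Rmult_comm. apply Rmult_le_compat_l; [apply Rabs_pos|]. apply HK. auto.
Qed.

Lemma Dn1 (u : R -> R) z : Derive_n u 1 z = Derive u z.
Proof. reflexivity. Qed.

Lemma isd_plus (f g : R -> R) x a b : is_derive f x a -> is_derive g x b -> is_derive (fun z => f z + g z) x (a + b).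
Proof. intros. now apply (is_derive_plus f g). Qed.
Lemma isd_minus (f g : R -> R) x a b : is_derive f x a -> is_derive g x b -> is_derive (fun z => f z - g z) x (a - b).
Proof. intros. now apply (is_derive_minus f g). Qed.
Lemma isd_scal (f : R -> R) c x a : is_derive f x a -> is_derive (fun z => c * f z) x (c * a).
Proof. intros. now apply (is_derive_scal f). Qed.
Lemma isd_div (f : R -> R) c x a : is_derive f x a -> is_derive (fun z => f z / c) x (a / c).
Proof. intros. unfold Rdiv. replace (a * / c) with (/ c * a) by ring.
  apply (is_derive_ext (fun z => / c * f z)); [intros t; change (/ c * f t = f t * / c); ring|]. now apply isd_scal. Qed.

Lemma diff_bound (F F' : R -> R) X h K : 0 < h -> (forall z, is_derive F z (F' z)) ->
  (forall z, X <= z <= X + h -> Rabs (F' z) <= K) -> Rabs (F (X + h) - F X) <= h * K.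
Proof.
  intros Hh Hd HK. eapply Rle_trans; [apply (mvt_bound F F' X (X + h) K Hd)|].
  - intros z Hz. apply HK. revert Hz. mm_tac.
  - right. f_equal. rewrite Rabs_right; lra.
Qed.

Definition gjl (f : fun3) j l := iter_op dX j (iter_op dY l f).

Lemma stencil_c2' u x h M : 0 < h -> exn u 4 ->
  (forall z, x - h <= z <= x + h -> Rabs (Derive_n u 4 z) <= M) ->
  Rabs (c2 u x h - Derive_n u 2 x) <= h ^ 2 / 12 * M.
Proof. intros. unfold c2. now apply stencil_c2. Qed.

Definition perX L (f : fun3) := forall t x y, f t (x + L) y = f t x y.
Definition perY L (f : fun3) := forall t x y, f t x (y + L) = f t x y.

Lemma perX_dX L f : perX L f -> perX L (dX f).
Proof.
  intros H t x y. unfold dX.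
  transitivity (Derive_n (fun s => f t (s + L) y) 1 x).
  - symmetry. exact (Derive_n_comp_trans (fun s => f t s y) 1 x L).
  - change (Derive (fun s => f t (s + L) y) x = Derive (fun s => f t s y) x).
    apply Derive_ext. intros s. apply H.
Qed.
Lemma perX_dY L f : perX L f -> perX L (dY f).
Proof. intros H t x y. unfold dY. apply Derive_ext. intros s. apply H. Qed.
Lemma perX_dT L f : perX L f -> perX L (dT f).
Proof. intros H t x y. unfold dT. apply Derive_ext. intros s. apply H. Qed.
Lemma perY_dY L f : perY L f -> perY L (dY f).
Proof.
  intros H t x y. unfold dY.
  transitivity (Derive_n (fun s => f t x (s + L)) 1 y).
  - symmetry. exact (Derive_n_comp_trans (fun s => f t x s) 1 y L).
  - change (Derive (fun s => f t x (s + L)) y = Derive (fun s => f t x s) y).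
    apply Derive_ext. intros s. apply H.
Qed.
Lemma perY_dX L f : perY L f -> perY L (dX f).
Proof. intros H t x y. unfold dX. apply Derive_ext. intros s. apply H. Qed.
Lemma perY_dT L f : perY L f -> perY L (dT f).
Proof. intros H t x y. unfold dT. apply Derive_ext. intros s. apply H. Qed.

Lemma per3_X L f : periodic3 L f -> perX L f.
Proof. intros H t x y. apply H. Qed.
Lemma per3_Y L f : periodic3 L f -> perY L f.
Proof. intros H t x y. apply H. Qed.

Lemma ext_box (G : fun3) L a b t : 0 < L -> perX L G -> perY L G ->
  (forall x y, a <= x <= a + L -> b <= y <= b + L -> G t x y = 0) ->
  forall x y, a <= x <= a + 2 * L -> b <= y <= b + 2 * L -> G t x y = 0.
Proof.
  intros HL HX HY H0.
  assert (Hx : forall x y, a <= x <= a + 2 * L -> b <= y <= b + L -> G t x y = 0).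
  { intros x y Hx Hy. destruct (Rle_lt_dec x (a + L)).
    - apply H0; lra.
    - replace x with ((x - L) + L) by ring. rewrite HX. apply H0; lra. }
  intros x y Hx' Hy. destruct (Rle_lt_dec y (b + L)).
  - apply Hx; lra.
  - replace y with ((y - L) + L) by ring. rewrite HY. apply Hx; lra.
Qed.

Definition LAPr (F : R -> R -> R) X Y h := c2 (fun s => F s Y) X h + c2 (fun s => F X s) Y h.
Definition DWGr (phi p : fun3) (p0 : R -> R -> R) t X Y h :=
  flux1 (fun s => phi t s Y / (p t s Y + p0 s Y)) (fun s => p t s Y + p0 s Y) X h
  + flux1 (fun s => phi t X s / (p t X s + p0 X s)) (fun s => p t X s + p0 X s) Y h.

Definition RPhik_real D h tau p0 (phi p : fun3) t1 X Y :=
  (phi (t1 + tau) X Y - phi t1 X Y) / tau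
  - D / 8 * (LAPr (phi (t1 + tau)) X Y h + LAPr (phi t1) X Y h)
  + 3 * D / 4 * DWGr phi p p0 t1 X Y h - D / 4 * DWGr phi p p0 (t1 - tau) X Y h
  + 3 / 2 * ((p t1 X Y + p0 X Y) * phi t1 X Y) - 1 / 2 * ((p (t1 - tau) X Y + p0 X Y) * phi (t1 - tau) X Y).

Definition RPk_real D eta h tau p0 (phi p : fun3) t1 X Y :=
  (p (t1 + tau) X Y - p t1 X Y) / tau
  - eta * D / 2 * (LAPr (p (t1 + tau)) X Y h + LAPr (p t1) X Y h)
  - 3 / 2 * ((p t1 X Y + p0 X Y) * phi t1 X Y - p t1 X Y)
  + 1 / 2 * ((p (t1 - tau) X Y + p0 X Y) * phi (t1 - tau) X Y - p (t1 - tau) X Y).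

Definition RPhi0_real D h tau p0 (phi p : fun3) X Y :=
  (phi tau X Y - phi 0 X Y) / tau - D / 4 * LAPr (phi tau) X Y h
  + D / 2 * DWGr phi p p0 0 X Y h + (p 0 X Y + p0 X Y) * phi 0 X Y.

Definition RP0_real D eta h tau p0 (phi p : fun3) X Y :=
  (p tau X Y - p 0 X Y) / tau - eta * D * LAPr (p tau) X Y h
  - (p 0 X Y + p0 X Y) * phi 0 X Y + p 0 X Y.

Lemma tk_S tau n : tk tau (S n) = tk tau n + tau.
Proof. unfold tk. rewrite S_INR. ring. Qed.

Lemma lapP amin bmin h (F : R -> R -> R) i j : h <> 0 ->
  lap h (restr amin bmin h F) i j = LAPr F (amin + IZR i * h) (bmin + IZR j * h) h.
Proof. intros. now apply lap_restr. Qed.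

Lemma Rphik_eq D amin bmin h tau p0 phi p k i j : h <> 0 ->
  Rphik D amin bmin h tau p0 phi p (S k) i j =
  RPhik_real D h tau p0 phi p (tk tau (S k)) (amin + IZR i * h) (bmin + IZR j * h).
Proof.
  intros Hh. unfold Rphik. rewrite lap_plus.
  replace (S k + 1)%nat with (S (S k)) by lia. replace (S k - 1)%nat with k by lia.
  rewrite (tk_S tau (S k)). replace (tk tau k) with (tk tau (S k) - tau) by (rewrite tk_S; ring).
  set (t1 := tk tau (S k)).
  rewrite (lapP amin bmin h (fun x y => phi (t1 + tau) x y)) by auto.
  rewrite (lapP amin bmin h (fun x y => phi t1 x y)) by auto.
  assert (Ed : forall t, divwgrad h (Wh amin bmin h p0 phi p t) (Vh amin bmin h p0 p t) i j
     = DWGr phi p p0 t (amin + IZR i * h) (bmin + IZR j * h) h).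
  { intros t. exact (divwgrad_restr amin bmin h (fun x y => phi t x y / (p t x y + p0 x y)) (fun x y => p t x y + p0 x y) i j). }
  rewrite !Ed. reflexivity.
Qed.

Lemma Rpk_eq D eta amin bmin h tau p0 phi p k i j : h <> 0 ->
  Rpk D eta amin bmin h tau p0 phi p (S k) i j =
  RPk_real D eta h tau p0 phi p (tk tau (S k)) (amin + IZR i * h) (bmin + IZR j * h).
Proof.
  intros Hh. unfold Rpk. rewrite lap_plus.
  replace (S k + 1)%nat with (S (S k)) by lia. replace (S k - 1)%nat with k by lia.
  rewrite (tk_S tau (S k)). replace (tk tau k) with (tk tau (S k) - tau) by (rewrite tk_S; ring).
  set (t1 := tk tau (S k)).
  rewrite (lapP amin bmin h (fun x y => p (t1 + tau) x y)) by auto.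
  rewrite (lapP amin bmin h (fun x y => p t1 x y)) by auto.
  reflexivity.
Qed.

Lemma Rphi0_eq D amin bmin h tau p0 phi p i j : h <> 0 ->
  Rphi0 D amin bmin h tau p0 phi p i j = RPhi0_real D h tau p0 phi p (amin + IZR i * h) (bmin + IZR j * h).
Proof.
  intros Hh. unfold Rphi0.
  rewrite (lapP amin bmin h (fun x y => phi tau x y)) by auto.
  assert (Ed : forall t, divwgrad h (Wh amin bmin h p0 phi p t) (Vh amin bmin h p0 p t) i j
     = DWGr phi p p0 t (amin + IZR i * h) (bmin + IZR j * h) h).
  { intros t. exact (divwgrad_restr amin bmin h (fun x y => phi t x y / (p t x y + p0 x y)) (fun x y => p t x y + p0 x y) i j). }
  rewrite !Ed. reflexivity.
Qed.

Lemma Rp0_eq D eta amin bmin h tau p0 phi p i j : h <> 0 ->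
  Rp0 D eta amin bmin h tau p0 phi p i j = RP0_real D eta h tau p0 phi p (amin + IZR i * h) (bmin + IZR j * h).
Proof.
  intros Hh. unfold Rp0.
  rewrite (lapP amin bmin h (fun x y => p tau x y)) by auto.
  reflexivity.
Qed.

Lemma scal_between c a b : 0 <= c -> Rabs a <= b -> - (c * b) <= c * a <= c * b.
Proof.
  intros Hc H. apply Rabs_le_between in H. split.
  - replace (- (c * b)) with (c * - b) by ring. apply Rmult_le_compat_l; lra.
  - apply Rmult_le_compat_l; lra.
Qed.

Lemma sumN_le n f c : (forall a, (1 <= a <= n)%nat -> f a <= c) -> sumN n f <= INR n * c.
Proof.
  induction n as [|n IH]; intros H; simpl sumN.
  - simpl. lra.
  - rewrite S_INR. assert (sumN n f <= INR n * c) by (apply IH; intros; apply H; lia).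
    assert (f (S n) <= c) by (apply H; lia). lra.
Qed.

Lemma gsum_le N u c : (forall a b, (1 <= a <= N)%nat -> (1 <= b <= N)%nat -> u (Z.of_nat a) (Z.of_nat b) <= c) ->
  gsum N u <= INR N * (INR N * c).
Proof.
  intros H. unfold gsum. apply sumN_le. intros a Ha. apply sumN_le. intros b Hb. apply H; auto.
Qed.

Lemma sq_le_of_abs a K : Rabs a <= K -> a * a <= K * K.
Proof. intros H. apply Rabs_le_between in H. nra. Qed.

Lemma normH1_bound N h u K0 K1 K2 : 0 < h -> 0 <= K0 -> 0 <= K1 -> 0 <= K2 ->
  (forall a b, (1 <= a <= N)%nat -> (1 <= b <= N)%nat -> Rabs (u (Z.of_nat a) (Z.of_nat b)) <= K0) ->
  (forall a b, (1 <= a <= N)%nat -> (1 <= b <= N)%nat -> Rabs (Dxg h u (Z.of_nat a) (Z.of_nat b)) <= K1) ->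
  (forall a b, (1 <= a <= N)%nat -> (1 <= b <= N)%nat -> Rabs (Dyg h u (Z.of_nat a) (Z.of_nat b)) <= K2) ->
  normH1 N h u <= (INR N * h) * (K0 + K1 + K2).
Proof.
  intros Hh H0 H1 H2 B0 B1 B2. unfold normH1, inner, gradsq.
  assert (G0 : gsum N (fun i j => u i j * u i j) <= INR N * (INR N * (K0 * K0))).
  { apply gsum_le. intros a b Ha Hb. apply sq_le_of_abs. auto. }
  assert (G1 : gsum N (fun i j => Dxg h u i j ^ 2 + Dyg h u i j ^ 2) <= INR N * (INR N * (K1 * K1 + K2 * K2))).
  { apply gsum_le. intros a b Ha Hb. simpl. rewrite !Rmult_1_r.
    pose proof (sq_le_of_abs _ _ (B1 a b Ha Hb)). pose proof (sq_le_of_abs _ _ (B2 a b Ha Hb)). lra. }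
  assert (HN : 0 <= INR N) by apply pos_INR.
  rewrite <- (sqrt_pow2 (INR N * h * (K0 + K1 + K2))) by (apply Rmult_le_pos; [apply Rmult_le_pos|]; lra).
  apply sqrt_le_1_alt.
  assert (0 <= h ^ 2) by (apply pow_le; lra).
  apply Rle_trans with (h ^ 2 * (INR N * (INR N * (K0 * K0))) + h ^ 2 * (INR N * (INR N * (K1 * K1 + K2 * K2)))).
  - apply Rplus_le_compat; apply Rmult_le_compat_l; auto.
  - assert (0 <= INR N * INR N * h ^ 2) by (apply Rmult_le_pos; [apply Rmult_le_pos|]; lra).
    assert (0 <= K0 * K1 + K0 * K2 + K1 * K2) by (repeat apply Rplus_le_le_0_compat; apply Rmult_le_pos; lra).
    replace ((INR N * h * (K0 + K1 + K2)) ^ 2) with (INR N * INR N * h ^ 2 * ((K0 * K0 + K1 * K1 + K2 * K2) + 2 * (K0 * K1 + K0 * K2 + K1 * K2))) by ring.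
    replace (h ^ 2 * (INR N * (INR N * (K0 * K0))) + h ^ 2 * (INR N * (INR N * (K1 * K1 + K2 * K2))))
      with (INR N * INR N * h ^ 2 * (K0 * K0 + K1 * K1 + K2 * K2)) by ring.
    nra.
Qed.

Lemma normL2_bound N h u K0 : 0 < h -> 0 <= K0 ->
  (forall a b, (1 <= a <= N)%nat -> (1 <= b <= N)%nat -> Rabs (u (Z.of_nat a) (Z.of_nat b)) <= K0) ->
  normL2 N h u <= (INR N * h) * K0.
Proof.
  intros Hh H0 B0. unfold normL2, inner.
  assert (G0 : gsum N (fun i j => u i j * u i j) <= INR N * (INR N * (K0 * K0))).
  { apply gsum_le. intros a b Ha Hb. apply sq_le_of_abs. auto. }
  assert (HN : 0 <= INR N) by apply pos_INR.
  rewrite <- (sqrt_pow2 (INR N * h * K0)) by (apply Rmult_le_pos; [apply Rmult_le_pos|]; lra).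
  apply sqrt_le_1_alt.
  assert (0 <= h ^ 2) by (apply pow_le; lra).
  apply Rle_trans with (h ^ 2 * (INR N * (INR N * (K0 * K0)))).
  - apply Rmult_le_compat_l; auto.
  - right. ring.
Qed.

Lemma Kinv_pos n m A : 0 < m -> 0 < Kinv n m A.
Proof.
  intros Hm. destruct n; simpl.
  - apply Rinv_0_lt_compat; auto.
  - eapply Rlt_le_trans; [|apply Rmax_l]. apply Rinv_0_lt_compat; auto.
Qed.

Lemma grid_pt amin N h a : (1 <= a <= N)%nat -> INR N * h > 0 -> 0 < h ->
  amin <= amin + IZR (Z.of_nat a) * h <= amin + INR N * h.
Proof.
  intros Ha HN Hh. rewrite <- INR_IZR_INZ.
  assert (1 <= INR a <= INR N) by (split; [apply (le_INR 1 a)|apply le_INR]; lia).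
  split; nra.
Qed.

Section Main.
Variables (L amin bmin D eta T mp : R) (p0 : R -> R -> R) (phi p : fun3).
Definition P0f : fun3 := fun _ x y => p0 x y.
Hypothesis HL : 0 < L.
Hypothesis HD : 0 < D.
Hypothesis Heta : 0 < eta.
Hypothesis HT : 0 < T.
Hypothesis Hmp : 0 < mp.
Hypothesis Hp0r : forall m, regular 0 m P0f.
Hypothesis Hp0lb : forall x y, mp <= p0 x y.
Hypothesis Hphi : regular 3 4 phi.
Hypothesis Hp : regular 3 5 p.
Hypothesis Hpper : periodic3 L p.
Hypothesis Hphiper : periodic3 L phi.
Hypothesis Hp0per : periodic3 L P0f.
Hypothesis Hnn : forall t x y, 0 <= t <= T -> 0 <= phi t x y /\ 0 <= p t x y.
Hypothesis Hsol : solves_system D eta T amin bmin L p0 phi p.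

Definition inXY (x y : R) := amin - L <= x <= amin + 3 * L /\ bmin - L <= y <= bmin + 3 * L.
Definition inB (t x y : R) := 0 <= t <= 2 * T /\ inXY x y.

Variables (Mphi Mpp M0 : R).
Hypothesis HMphi : forall i j l t x y, (i <= 3)%nat -> (j + l <= 4)%nat -> inB t x y -> Rabs (mixed i j l phi t x y) <= Mphi.
Hypothesis HMp : forall i j l t x y, (i <= 3)%nat -> (j + l <= 5)%nat -> inB t x y -> Rabs (mixed i j l p t x y) <= Mpp.
Hypothesis HM0 : forall j l t x y, (j + l <= 5)%nat -> inB t x y -> Rabs (mixed 0 j l P0f t x y) <= M0.

Lemma q_pos t x y : 0 <= t <= T -> mp <= p t x y + p0 x y.
Proof. intros Ht. destruct (Hnn t x y Ht). specialize (Hp0lb x y). lra. Qed.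

Definition wX t y := fun s => phi t s y / (p t s y + p0 s y).
Definition vX t y := fun s => p t s y + p0 s y.
Definition wY t x := fun s => phi t x s / (p t x s + p0 x s).
Definition vY t x := fun s => p t x s + p0 x s.

Lemma exn_vX t y : exn (vX t y) 5.
Proof.
  apply exn_plus.
  - exact (reg_exX 3 5 p 0 Hp ltac:(lia) t y).
  - exact (reg_exX 0 5 P0f 0 (Hp0r 5) ltac:(lia) t y).
Qed.

Lemma exn_vY t x : exn (vY t x) 5.
Proof.
  apply exn_plus.
  - exact (reg_exY 3 5 p Hp t x).
  - exact (reg_exY 0 5 P0f (Hp0r 5) t x).
Qed.

Lemma Pb_vX t y z : inB t z y -> Pb (vX t y) 4 z (Mpp + M0).
Proof.
  intros Hb. apply Pb_plus.
  - exact (exn_le _ 5 4 ltac:(lia) (reg_exX 3 5 p 0 Hp ltac:(lia) t y)).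
  - exact (exn_le _ 5 4 ltac:(lia) (reg_exX 0 5 P0f 0 (Hp0r 5) ltac:(lia) t y)).
  - intros k Hk. rewrite (DnX p k 0). apply HMp; auto; lia.
  - intros k Hk. change (Rabs (Derive_n (fun s => iter_op dY 0 P0f t s y) k z) <= M0).
    rewrite (DnX P0f k 0). apply HM0; auto; lia.
Qed.

Lemma Pb_vY t x z : inB t x z -> Pb (vY t x) 4 z (Mpp + M0).
Proof.
  intros Hb. apply Pb_plus.
  - exact (exn_le _ 5 4 ltac:(lia) (reg_exY 3 5 p Hp t x)).
  - exact (exn_le _ 5 4 ltac:(lia) (reg_exY 0 5 P0f (Hp0r 5) t x)).
  - intros k Hk. rewrite (DnY p k). apply HMp; auto; lia.
  - intros k Hk. change (Rabs (Derive_n (fun s => P0f t x s) k z) <= M0).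
    rewrite (DnY P0f k). apply HM0; auto; lia.
Qed.

Definition Kw := 2 ^ 3 * Mphi * Kinv 3 mp (Mpp + M0).

Lemma w_propX t y : 0 <= t <= T -> exn (wX t y) 3 /\ forall z, inB t z y -> Pb (wX t y) 3 z Kw.
Proof.
  intros Ht.
  assert (Hph : exn (fun s => phi t s y) 3) by exact (exn_le _ 4 3 ltac:(lia) (reg_exX 3 4 phi 0 Hphi ltac:(lia) t y)).
  destruct (inv_prop 3 mp Hmp (vX t y) (exn_le _ 5 3 ltac:(lia) (exn_vX t y)) (fun x => q_pos t x y Ht)) as [Ei Pi].
  destruct (mult_prop 3 _ _ Hph Ei) as [Em Pm].
  split; [exact Em|].
  intros z Hb. apply Pm.
  - intros k Hk. rewrite (DnX phi k 0). apply HMphi; auto; lia.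
  - apply Pi. apply Pb_le with 4%nat; [lia|]. apply Pb_vX; auto.
Qed.

Lemma w_propY t x : 0 <= t <= T -> exn (wY t x) 3 /\ forall z, inB t x z -> Pb (wY t x) 3 z Kw.
Proof.
  intros Ht.
  assert (Hph : exn (fun s => phi t x s) 3) by exact (exn_le _ 4 3 ltac:(lia) (reg_exY 3 4 phi Hphi t x)).
  destruct (inv_prop 3 mp Hmp (vY t x) (exn_le _ 5 3 ltac:(lia) (exn_vY t x)) (fun y => q_pos t x y Ht)) as [Ei Pi].
  destruct (mult_prop 3 _ _ Hph Ei) as [Em Pm].
  split; [exact Em|].
  intros z Hb. apply Pm.
  - intros k Hk. rewrite (DnY phi k). apply HMphi; auto; lia.
  - apply Pi. apply Pb_le with 4%nat; [lia|]. apply Pb_vY; auto.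
Qed.

Lemma dX_flux_eq t x y : 0 <= t <= T ->
  dX (fun t0 x0 y0 => dX phi t0 x0 y0 - 2 * phi t0 x0 y0 / (p t0 x0 y0 + p0 x0 y0) *
      dX (fun t1 x1 y1 => p t1 x1 y1 + p0 x1 y1) t0 x0 y0) t x y
  = dX (dX phi) t x y - 2 * Derive (fun s => wX t y s * Derive (vX t y) s) x.
Proof.
  intros Ht. destruct (w_propX t y Ht) as [Ew _].
  unfold dX at 1.
  rewrite (Derive_ext _ (fun s => dX phi t s y - 2 * (wX t y s * Derive (vX t y) s))).
  2:{ intros s. unfold wX, Rdiv. change (dX (fun t1 x1 y1 => p t1 x1 y1 + p0 x1 y1) t s y) with (Derive (vX t y) s). ring. }
  rewrite Derive_minus_R.
  - rewrite Derive_scal. reflexivity.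
  - apply (exn_ex_k _ (4 - 0) 1 x (reg_exX 3 4 phi 0 Hphi ltac:(lia) t y)). lia.
  - apply ex_derive_scal. apply ex_derive_mult.
    + apply (exn_ex _ 2 x Ew).
    + apply (exn_ex_k _ 5 1 x (exn_vX t y)). lia.
Qed.

Lemma dY_flux_eq t x y : 0 <= t <= T ->
  dY (fun t0 x0 y0 => dY phi t0 x0 y0 - 2 * phi t0 x0 y0 / (p t0 x0 y0 + p0 x0 y0) *
      dY (fun t1 x1 y1 => p t1 x1 y1 + p0 x1 y1) t0 x0 y0) t x y
  = dY (dY phi) t x y - 2 * Derive (fun s => wY t x s * Derive (vY t x) s) y.
Proof.
  intros Ht. destruct (w_propY t x Ht) as [Ew _].
  unfold dY at 1.
  rewrite (Derive_ext _ (fun s => dY phi t x s - 2 * (wY t x s * Derive (vY t x) s))).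
  2:{ intros s. unfold wY, Rdiv. change (dY (fun t1 x1 y1 => p t1 x1 y1 + p0 x1 y1) t x s) with (Derive (vY t x) s). ring. }
  rewrite Derive_minus_R.
  - rewrite Derive_scal. reflexivity.
  - apply (exn_ex_k _ 4 1 y (reg_exY 3 4 phi Hphi t x)). lia.
  - apply ex_derive_scal. apply ex_derive_mult.
    + apply (exn_ex _ 2 y Ew).
    + apply (exn_ex_k _ 5 1 y (exn_vY t x)). lia.
Qed.

Lemma pde_phi t x y : 0 <= t <= T -> amin <= x <= amin + L -> bmin <= y <= bmin + L ->
  dT phi t x y = D / 4 * (dX (dX phi) t x y - 2 * Derive (fun s => wX t y s * Derive (vX t y) s) x
     + (dY (dY phi) t x y - 2 * Derive (fun s => wY t x s * Derive (vY t x) s) y))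
     - (p t x y + p0 x y) * phi t x y.
Proof.
  intros Ht Hx Hy. destruct (Hsol t x y Ht Hx Hy) as [E _]. cbv zeta in E. rewrite E.
  rewrite dX_flux_eq, dY_flux_eq by auto. reflexivity.
Qed.
Lemma pde_p t x y : 0 <= t <= T -> amin <= x <= amin + 2 * L -> bmin <= y <= bmin + 2 * L ->
  dT p t x y = eta * D * (dX (dX p) t x y + dY (dY p) t x y) + (p t x y + p0 x y) * phi t x y - p t x y.
Proof.
  intros Ht Hx Hy.
  set (G := fun t x y => dT p t x y - (eta * D * (dX (dX p) t x y + dY (dY p) t x y) + (p t x y + p0 x y) * phi t x y - p t x y)).
  assert (HpX := per3_X L p Hpper). assert (HpY := per3_Y L p Hpper).
  assert (HfX := per3_X L phi Hphiper). assert (HfY := per3_Y L phi Hphiper).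
  assert (H0X := per3_X L P0f Hp0per). assert (H0Y := per3_Y L P0f Hp0per).
  assert (Hz : G t x y = 0).
  { apply (ext_box G L amin bmin t HL).
    - intros t' x' y'. unfold G.
      rewrite (perX_dT L p HpX), (perX_dX L _ (perX_dX L p HpX)), (perX_dY L _ (perX_dY L p HpX)), HpX, HfX.
      pose proof (H0X t' x' y') as E0. unfold P0f in E0. rewrite E0. reflexivity.
    - intros t' x' y'. unfold G.
      rewrite (perY_dT L p HpY), (perY_dX L _ (perY_dX L p HpY)), (perY_dY L _ (perY_dY L p HpY)), HpY, HfY.
      pose proof (H0Y t' x' y') as E0. unfold P0f in E0. rewrite E0. reflexivity.
    - intros x' y' Hx' Hy'. unfold G. destruct (Hsol t x' y' Ht Hx' Hy') as [_ E]. cbv zeta in E. rewrite E. ring.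
    - auto.
    - auto. }
  unfold G in Hz. lra.
Qed.
Lemma inXY_x a b z Y : inXY a Y -> inXY b Y -> a <= z <= b -> inXY z Y.
Proof. unfold inXY. intros. lra. Qed.
Lemma inXY_y X a b z : inXY X a -> inXY X b -> a <= z <= b -> inXY X z.
Proof. unfold inXY. intros. lra. Qed.

Lemma inXY_box a b c d x y : inXY a c -> inXY b d -> a <= x <= b -> c <= y <= d -> inXY x y.
Proof. unfold inXY. intros. lra. Qed.

Section Gen.
Variables (f : fun3) (m : nat) (M : R).
Hypothesis Hr : regular 3 m f.
Hypothesis HM : forall i j l t x y, (i <= 3)%nat -> (j + l <= m)%nat -> inB t x y -> Rabs (mixed i j l f t x y) <= M.

Lemma ts_ab j l t tau X Y : (j + l <= m)%nat -> 0 < tau -> 0 <= t - tau -> t + tau <= 2 * T -> inXY X Y ->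
  Rabs ((gjl f j l (t + tau) X Y - gjl f j l t X Y) / tau
        - 3 / 2 * Derive (fun s => gjl f j l s X Y) t + 1 / 2 * Derive (fun s => gjl f j l s X Y) (t - tau))
  <= tau ^ 2 * M.
Proof.
  intros Hjl Ht H0 H1 HX.
  pose proof (stencil_ab (fun s => gjl f j l s X Y) t tau M Ht (reg_exT 3 m f j l Hr Hjl X Y)) as H.
  change (Derive_n (fun s => gjl f j l s X Y) 1) with (Derive (fun s => gjl f j l s X Y)) in H.
  apply H. intros z Hz. unfold gjl. rewrite DnT. apply HM; [lia|lia|]. split; [lra|auto].
Qed.

Lemma ts_dd j l t tau X Y : (j + l <= m)%nat -> 0 < tau -> 0 <= t - tau -> t + tau <= 2 * T -> inXY X Y ->
  Rabs (gjl f j l (t + tau) X Y - 2 * gjl f j l t X Y + gjl f j l (t - tau) X Y) <= tau ^ 2 * M.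
Proof.
  intros Hjl Ht H0 H1 HX.
  apply (stencil_dd (fun s => gjl f j l s X Y) t tau M Ht (exn_le _ 3 2 ltac:(lia) (reg_exT 3 m f j l Hr Hjl X Y))).
  intros z Hz. unfold gjl. rewrite DnT. apply HM; [lia|lia|]. split; [lra|auto].
Qed.

Lemma ts_fo j l tau X Y : (j + l <= m)%nat -> 0 < tau -> tau <= 2 * T -> inXY X Y ->
  Rabs ((gjl f j l tau X Y - gjl f j l 0 X Y) / tau - Derive (fun s => gjl f j l s X Y) 0) <= tau / 2 * M.
Proof.
  intros Hjl Ht H1 HX.
  pose proof (stencil_fo (fun s => gjl f j l s X Y) 0 tau M Ht (exn_le _ 3 2 ltac:(lia) (reg_exT 3 m f j l Hr Hjl X Y))) as H.
  change (Derive_n (fun s => gjl f j l s X Y) 1) with (Derive (fun s => gjl f j l s X Y)) in H.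
  rewrite Rplus_0_l in H. apply H. intros z Hz. unfold gjl. rewrite DnT. apply HM; [lia|lia|]. split; [lra|auto].
Qed.

Lemma ts_lip j l tau X Y : (j + l <= m)%nat -> 0 < tau -> tau <= 2 * T -> inXY X Y ->
  Rabs (gjl f j l tau X Y - gjl f j l 0 X Y) <= tau * M.
Proof.
  intros Hjl Ht H1 HX.
  pose proof (stencil_lip (fun s => gjl f j l s X Y) 0 tau M (exn_le _ 3 1 ltac:(lia) (reg_exT 3 m f j l Hr Hjl X Y))) as H.
  rewrite Rminus_0_r, (Rabs_right tau) in H by lra. apply H.
  intros z Hz. unfold gjl. rewrite DnT. apply HM; [lia|lia|]. split; [revert Hz; mm_tac|auto].
Qed.

Lemma sp_c2x l t X Y h : (4 + l <= m)%nat -> 0 < h -> 0 <= t <= 2 * T -> inXY (X - h) Y -> inXY (X + h) Y ->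
  Rabs (c2 (fun s => gjl f 0 l t s Y) X h - gjl f 2 l t X Y) <= h ^ 2 / 12 * M.
Proof.
  intros Hl Hh Ht H1 H2. unfold c2.
  pose proof (stencil_c2 (fun s => gjl f 0 l t s Y) X h M Hh) as H.
  unfold gjl in *. change (iter_op dX 0 (iter_op dY l f)) with (iter_op dY l f) in *. rewrite DnX in H.
  replace (iter_op dX 2 (iter_op dY l f) t X Y) with (mixed 0 2 l f t X Y) by reflexivity.
  apply H.
  - exact (exn_le _ (m - l) 4 ltac:(lia) (reg_exX 3 m f l Hr ltac:(lia) t Y)).
  - intros z Hz. rewrite DnX. apply HM; [lia|lia|]. split; [lra|]. apply (inXY_x (X - h) (X + h)); auto; lra.
Qed.

Lemma sp_c2y t X Y h : (4 <= m)%nat -> 0 < h -> 0 <= t <= 2 * T -> inXY X (Y - h) -> inXY X (Y + h) ->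
  Rabs (c2 (fun s => f t X s) Y h - iter_op dY 2 f t X Y) <= h ^ 2 / 12 * M.
Proof.
  intros Hl Hh Ht H1 H2. unfold c2.
  pose proof (stencil_c2 (fun s => f t X s) Y h M Hh) as H.
  rewrite DnY in H.
  replace (iter_op dY 2 f t X Y) with (mixed 0 0 2 f t X Y) by reflexivity.
  apply H.
  - exact (exn_le _ m 4 ltac:(lia) (reg_exY 3 m f Hr t X)).
  - intros z Hz. rewrite DnY. apply HM; [lia|lia|]. split; [lra|]. apply (inXY_y X (Y - h) (Y + h)); auto; lra.
Qed.

Lemma dx_base j l s x y : (S j + l <= m)%nat -> is_derive (fun z => gjl f j l s z y) x (gjl f (S j) l s x y).
Proof.
  intros Hjl. unfold gjl.
  change (iter_op dX (S j) (iter_op dY l f) s x y) with (Derive (fun z => iter_op dX j (iter_op dY l f) s z y) x).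
  apply Derive_correct.
  apply ex_derive_ext with (f := Derive_n (fun z => iter_op dY l f s z y) j).
  - intros z. symmetry. apply iterX.
  - apply (exn_ex_k _ (m - l) j x (reg_exX 3 m f l Hr ltac:(lia) s y)). lia.
Qed.

Lemma dy_base l s x y : (S l <= m)%nat -> is_derive (fun z => gjl f 0 l s x z) y (gjl f 0 (S l) s x y).
Proof.
  intros Hl. unfold gjl.
  change (iter_op dX 0 (iter_op dY (S l) f) s x y) with (Derive (fun z => iter_op dY l f s x z) y).
  apply Derive_correct.
  apply ex_derive_ext with (f := Derive_n (fun z => f s x z) l).
  - intros z. symmetry. apply iterY.
  - apply (exn_ex_k _ m l y (reg_exY 3 m f Hr s x)). lia.
Qed.

Lemma exfX t y : exn (fun s => f t s y) m.
Proof. exact (exn_le _ (m - 0) m ltac:(lia) (reg_exX 3 m f 0 Hr ltac:(lia) t y)). Qed.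
Lemma exfY t x : exn (fun s => f t x s) m.
Proof. exact (reg_exY 3 m f Hr t x). Qed.

Lemma shift_exn (u : R -> R) n h : exn u n -> exn (fun s => u (s + h) - u s) n.
Proof.
  intros H k z Hk. apply ex_derive_n_minus; apply loc_all; intros w j Hj.
  - apply ex_derive_n_comp_trans. apply H. lia.
  - apply H. lia.
Qed.

Lemma shift_Dn (u : R -> R) n h k z : exn u n -> (k <= n)%nat ->
  Derive_n (fun s => u (s + h) - u s) k z = Derive_n u k (z + h) - Derive_n u k z.
Proof.
  intros H Hk. rewrite Derive_n_minus.
  - rewrite Derive_n_comp_trans. reflexivity.
  - apply loc_all. intros w j Hj. apply ex_derive_n_comp_trans. apply H. lia.
  - apply loc_all. intros w j Hj. apply H. lia.
Qed.

Lemma diff_exn (u v : R -> R) n : exn u n -> exn v n -> exn (fun s => u s - v s) n.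
Proof.
  intros Hu Hv k z Hk. apply ex_derive_n_minus; apply loc_all; intros w j Hj; [apply Hu|apply Hv]; lia.
Qed.

Lemma diff_Dn (u v : R -> R) n k z : exn u n -> exn v n -> (k <= n)%nat ->
  Derive_n (fun s => u s - v s) k z = Derive_n u k z - Derive_n v k z.
Proof.
  intros Hu Hv Hk. apply Derive_n_minus; apply loc_all; intros w j Hj; [apply Hu|apply Hv]; lia.
Qed.

Lemma c2_shift (u : R -> R) X h : h <> 0 -> c2 (fun s => u (s + h) - u s) X h = c2 u (X + h) h - c2 u X h.
Proof.
  intros Hh. unfold c2. replace (X - h + h) with X by ring. replace (X + h - h) with X by ring. field. auto.
Qed.

Lemma c2_diff (u v : R -> R) X h : h <> 0 -> c2 (fun s => u s - v s) X h = c2 u X h - c2 v X h.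
Proof. intros Hh. unfold c2. field. auto. Qed.

Lemma sp_dx_x t X Y h : (5 <= m)%nat -> 0 < h -> 0 <= t <= 2 * T -> inXY (X - h) Y -> inXY (X + 2 * h) Y ->
  Rabs ((c2 (fun s => f t s Y) (X + h) h - gjl f 2 0 t (X + h) Y) - (c2 (fun s => f t s Y) X h - gjl f 2 0 t X Y))
  <= h * (h ^ 2 / 12 * M).
Proof.
  intros Hm Hh Ht H1 H2.
  set (u := fun s => f t s Y).
  assert (Eu : exn u 5) by exact (exn_le _ m 5 Hm (exfX t Y)).
  pose proof (stencil_c2' (fun s => u (s + h) - u s) X h (h * M) Hh (exn_le _ 5 4 ltac:(lia) (shift_exn u 5 h Eu))) as H.
  rewrite c2_shift, shift_Dn with (n := 5%nat) in H by first [lra | lia | assumption].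
  unfold u in H. rewrite !(DnX f 2 0) in H.
  assert (Hb : forall z, X - h <= z <= X + h -> Rabs (Derive_n (fun s => f t (s + h) Y - f t s Y) 4 z) <= h * M).
  { intros z Hz. change (Rabs (Derive_n (fun s => u (s + h) - u s) 4 z) <= h * M).
    rewrite shift_Dn with (n := 5%nat) by first [lra | lia | assumption].
    apply (diff_bound (Derive_n u 4) (Derive_n u 5) z h M Hh).
    - intros w. apply Derive_correct. apply (Eu 5%nat w). lia.
    - intros w Hw. unfold u. rewrite (DnX f 5 0). apply HM; [lia|lia|]. split; [lra|].
      apply (inXY_x (X - h) (X + 2 * h)); auto; lra. }
  specialize (H Hb). eapply Rle_trans; [apply Req_le|eapply Rle_trans; [exact H|apply Req_le; ring]].
  f_equal. unfold u, gjl, mixed. cbn [iter_op]. ring.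
Qed.

Lemma sp_dy_y t X Y h : (5 <= m)%nat -> 0 < h -> 0 <= t <= 2 * T -> inXY X (Y - h) -> inXY X (Y + 2 * h) ->
  Rabs ((c2 (fun s => f t X s) (Y + h) h - gjl f 0 2 t X (Y + h)) - (c2 (fun s => f t X s) Y h - gjl f 0 2 t X Y))
  <= h * (h ^ 2 / 12 * M).
Proof.
  intros Hm Hh Ht H1 H2.
  set (u := fun s => f t X s).
  assert (Eu : exn u 5) by exact (exn_le _ m 5 Hm (exfY t X)).
  pose proof (stencil_c2' (fun s => u (s + h) - u s) Y h (h * M) Hh (exn_le _ 5 4 ltac:(lia) (shift_exn u 5 h Eu))) as H.
  rewrite c2_shift, shift_Dn with (n := 5%nat) in H by first [lra | lia | assumption].
  unfold u in H. rewrite !(DnY f 2) in H.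
  assert (Hb : forall z, Y - h <= z <= Y + h -> Rabs (Derive_n (fun s => f t X (s + h) - f t X s) 4 z) <= h * M).
  { intros z Hz. change (Rabs (Derive_n (fun s => u (s + h) - u s) 4 z) <= h * M).
    rewrite shift_Dn with (n := 5%nat) by first [lra | lia | assumption].
    apply (diff_bound (Derive_n u 4) (Derive_n u 5) z h M Hh).
    - intros w. apply Derive_correct. apply (Eu 5%nat w). lia.
    - intros w Hw. unfold u. rewrite (DnY f 5). apply HM; [lia|lia|]. split; [lra|].
      apply (inXY_y X (Y - h) (Y + 2 * h)); auto; lra. }
  specialize (H Hb). eapply Rle_trans; [apply Req_le|eapply Rle_trans; [exact H|apply Req_le; ring]].
  f_equal. unfold u, gjl, mixed. cbn [iter_op]. ring.
Qed.

Lemma sp_dx_y t X Y h : (5 <= m)%nat -> 0 < h -> 0 <= t <= 2 * T -> inXY X (Y - h) -> inXY (X + h) (Y + h) ->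
  Rabs ((c2 (fun s => f t (X + h) s) Y h - gjl f 0 2 t (X + h) Y) - (c2 (fun s => f t X s) Y h - gjl f 0 2 t X Y))
  <= h * (h ^ 2 / 12 * M).
Proof.
  intros Hm Hh Ht H1 H2.
  set (u1 := fun s => f t (X + h) s). set (u0 := fun s => f t X s).
  assert (E1 : exn u1 5) by exact (exn_le _ m 5 Hm (exfY t (X + h))).
  assert (E0 : exn u0 5) by exact (exn_le _ m 5 Hm (exfY t X)).
  pose proof (stencil_c2' (fun s => u1 s - u0 s) Y h (h * M) Hh (exn_le _ 5 4 ltac:(lia) (diff_exn u1 u0 5 E1 E0))) as H.
  rewrite c2_diff, diff_Dn with (n := 5%nat) in H by first [lra | lia | assumption].
  unfold u1, u0 in H. rewrite !(DnY f 2) in H.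
  assert (Hb : forall z, Y - h <= z <= Y + h -> Rabs (Derive_n (fun s => f t (X + h) s - f t X s) 4 z) <= h * M).
  { intros z Hz. change (Rabs (Derive_n (fun s => u1 s - u0 s) 4 z) <= h * M).
    rewrite diff_Dn with (n := 5%nat) by first [lra | lia | assumption].
    unfold u1, u0. rewrite !(DnY f 4).
    change (Rabs (gjl f 0 4 t (X + h) z - gjl f 0 4 t X z) <= h * M).
    apply (diff_bound (fun w => gjl f 0 4 t w z) (fun w => gjl f 1 4 t w z) X h M Hh).
    - intros w. apply dx_base. lia.
    - intros w Hw. unfold gjl. change (Rabs (mixed 0 1 4 f t w z) <= M). apply HM; [lia|lia|]. split; [lra|].
      apply (inXY_box X (X + h) (Y - h) (Y + h)); auto; lra. }
  specialize (H Hb). eapply Rle_trans; [apply Req_le|eapply Rle_trans; [exact H|apply Req_le; ring]].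
  f_equal. unfold u1, u0, gjl, mixed. cbn [iter_op]. ring.
Qed.

Lemma is_derive_c2 (g : R -> R -> R) (g' : R -> R -> R) X h y : h <> 0 ->
  (forall a, is_derive (fun s => g a s) y (g' a y)) ->
  is_derive (fun s => c2 (fun a => g a s) X h) y (c2 (fun a => g' a y) X h).
Proof.
  intros Hh Hd. unfold c2. apply isd_div.
  apply isd_plus; [apply isd_minus|]; auto. apply isd_scal. auto.
Qed.

Lemma sp_dy_x t X Y h : (5 <= m)%nat -> 0 < h -> 0 <= t <= 2 * T -> inXY (X - h) Y -> inXY (X + h) (Y + h) ->
  Rabs ((c2 (fun s => f t s (Y + h)) X h - gjl f 2 0 t X (Y + h)) - (c2 (fun s => f t s Y) X h - gjl f 2 0 t X Y))
  <= h * (h ^ 2 / 12 * M).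
Proof.
  intros Hm Hh Ht H1 H2.
  apply (diff_bound (fun y => c2 (fun s => f t s y) X h - gjl f 2 0 t X y)
                    (fun y => c2 (fun s => gjl f 0 1 t s y) X h - gjl f 2 1 t X y) Y h _ Hh).
  - intros y. apply isd_minus.
    + apply (is_derive_c2 (fun a s => f t a s) (fun a s => gjl f 0 1 t a s)); [lra|].
      intros a. apply (dy_base 0). lia.
    + apply (clair_xy2 3 m f Hr ltac:(lia)).
  - intros y Hy. apply (sp_c2x 1); auto; try lia.
    + apply (inXY_box (X - h) (X + h) Y (Y + h)); auto; lra.
    + apply (inXY_box (X - h) (X + h) Y (Y + h)); auto; lra.
Qed.

Definition TP1x t tau Y := fun x => (f (t + tau) x Y - f t x Y) / tau - 3 / 2 * dT f t x Y + 1 / 2 * dT f (t - tau) x Y.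
Definition TP1y t tau X := fun y => (f (t + tau) X y - f t X y) / tau - 3 / 2 * dT f t X y + 1 / 2 * dT f (t - tau) X y.
Definition Lapf t := fun x y => gjl f 2 0 t x y + gjl f 0 2 t x y.
Definition TP2x t tau Y := fun x => Lapf (t + tau) x Y - 2 * Lapf t x Y + Lapf (t - tau) x Y.
Definition TP2y t tau X := fun y => Lapf (t + tau) X y - 2 * Lapf t X y + Lapf (t - tau) X y.
Definition FOx tau Y := fun x => (f tau x Y - f 0 x Y) / tau - dT f 0 x Y.
Definition FOy tau X := fun y => (f tau X y - f 0 X y) / tau - dT f 0 X y.
Definition LIx tau Y := fun x => Lapf tau x Y - Lapf 0 x Y.
Definition LIy tau X := fun y => Lapf tau X y - Lapf 0 X y.

Lemma tp1_dx t tau X Y h : (1 <= m)%nat -> 0 < h -> 0 < tau -> 0 <= t - tau -> t + tau <= 2 * T ->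
  inXY X Y -> inXY (X + h) Y -> Rabs (TP1x t tau Y (X + h) - TP1x t tau Y X) <= h * (tau ^ 2 * M).
Proof.
  intros Hm Hh Ht H0 H1 HX1 HX2.
  apply (diff_bound _ (fun x => (gjl f 1 0 (t + tau) x Y - gjl f 1 0 t x Y) / tau
     - 3 / 2 * Derive (fun s => gjl f 1 0 s x Y) t + 1 / 2 * Derive (fun s => gjl f 1 0 s x Y) (t - tau)) X h _ Hh).
  - intros x. unfold TP1x. apply isd_plus; [apply isd_minus|].
    + apply isd_div. apply isd_minus; apply (dx_base 0 0); lia.
    + apply isd_scal. apply (clair_tx 3 m f Hr ltac:(lia) Hm).
    + apply isd_scal. apply (clair_tx 3 m f Hr ltac:(lia) Hm).
  - intros x Hx. apply ts_ab; [lia|auto|auto|auto|apply (inXY_x X (X + h)); auto; lra].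
Qed.

Lemma tp1_dy t tau X Y h : (1 <= m)%nat -> 0 < h -> 0 < tau -> 0 <= t - tau -> t + tau <= 2 * T ->
  inXY X Y -> inXY X (Y + h) -> Rabs (TP1y t tau X (Y + h) - TP1y t tau X Y) <= h * (tau ^ 2 * M).
Proof.
  intros Hm Hh Ht H0 H1 HX1 HX2.
  apply (diff_bound _ (fun y => (gjl f 0 1 (t + tau) X y - gjl f 0 1 t X y) / tau
     - 3 / 2 * Derive (fun s => gjl f 0 1 s X y) t + 1 / 2 * Derive (fun s => gjl f 0 1 s X y) (t - tau)) Y h _ Hh).
  - intros y. unfold TP1y. apply isd_plus; [apply isd_minus|].
    + apply isd_div. apply isd_minus; apply (dy_base 0); lia.
    + apply isd_scal. apply (clair_ty 3 m f Hr ltac:(lia) Hm).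
    + apply isd_scal. apply (clair_ty 3 m f Hr ltac:(lia) Hm).
  - intros y Hy. apply ts_ab; [lia|auto|auto|auto|apply (inXY_y X Y (Y + h)); auto; lra].
Qed.

Lemma isd_Lapx s x Y : (3 <= m)%nat -> is_derive (fun z => Lapf s z Y) x (gjl f 3 0 s x Y + gjl f 1 2 s x Y).
Proof. intros Hm. unfold Lapf. apply isd_plus; apply dx_base; lia. Qed.

Lemma isd_Lapy s X y : (3 <= m)%nat -> is_derive (fun z => Lapf s X z) y (gjl f 2 1 s X y + gjl f 0 3 s X y).
Proof.
  intros Hm. unfold Lapf. apply isd_plus.
  - apply (clair_xy2 3 m f Hr Hm).
  - apply dy_base. lia.
Qed.

Lemma tp2_dx t tau X Y h : (3 <= m)%nat -> 0 < h -> 0 < tau -> 0 <= t - tau -> t + tau <= 2 * T ->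
  inXY X Y -> inXY (X + h) Y -> Rabs (TP2x t tau Y (X + h) - TP2x t tau Y X) <= h * (2 * (tau ^ 2 * M)).
Proof.
  intros Hm Hh Ht H0 H1 HX1 HX2.
  apply (diff_bound _ (fun x => (gjl f 3 0 (t + tau) x Y + gjl f 1 2 (t + tau) x Y)
     - 2 * (gjl f 3 0 t x Y + gjl f 1 2 t x Y) + (gjl f 3 0 (t - tau) x Y + gjl f 1 2 (t - tau) x Y)) X h _ Hh).
  - intros x. unfold TP2x. apply isd_plus; [apply isd_minus; [|apply isd_scal]|]; apply isd_Lapx; auto.
  - intros x Hx. assert (inXY x Y) by (apply (inXY_x X (X + h)); auto; lra).
    pose proof (ts_dd 3 0 t tau x Y ltac:(lia) Ht H0 H1 H).
    pose proof (ts_dd 1 2 t tau x Y ltac:(lia) Ht H0 H1 H).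
    replace (2 * (tau ^ 2 * M)) with (tau ^ 2 * M + tau ^ 2 * M) by ring.
    eapply Rle_trans; [|apply Rabs_tri2; [exact H2|exact H3]].
    right. f_equal. ring.
Qed.

Lemma tp2_dy t tau X Y h : (3 <= m)%nat -> 0 < h -> 0 < tau -> 0 <= t - tau -> t + tau <= 2 * T ->
  inXY X Y -> inXY X (Y + h) -> Rabs (TP2y t tau X (Y + h) - TP2y t tau X Y) <= h * (2 * (tau ^ 2 * M)).
Proof.
  intros Hm Hh Ht H0 H1 HX1 HX2.
  apply (diff_bound _ (fun y => (gjl f 2 1 (t + tau) X y + gjl f 0 3 (t + tau) X y)
     - 2 * (gjl f 2 1 t X y + gjl f 0 3 t X y) + (gjl f 2 1 (t - tau) X y + gjl f 0 3 (t - tau) X y)) Y h _ Hh).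
  - intros y. unfold TP2y. apply isd_plus; [apply isd_minus; [|apply isd_scal]|]; apply isd_Lapy; auto.
  - intros y Hy. assert (inXY X y) by (apply (inXY_y X Y (Y + h)); auto; lra).
    pose proof (ts_dd 2 1 t tau X y ltac:(lia) Ht H0 H1 H).
    pose proof (ts_dd 0 3 t tau X y ltac:(lia) Ht H0 H1 H).
    replace (2 * (tau ^ 2 * M)) with (tau ^ 2 * M + tau ^ 2 * M) by ring.
    eapply Rle_trans; [|apply Rabs_tri2; [exact H2|exact H3]].
    right. f_equal. ring.
Qed.

Lemma fo_dx tau X Y h : (1 <= m)%nat -> 0 < h -> 0 < tau -> tau <= 2 * T ->
  inXY X Y -> inXY (X + h) Y -> Rabs (FOx tau Y (X + h) - FOx tau Y X) <= h * (tau / 2 * M).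
Proof.
  intros Hm Hh Ht H1 HX1 HX2.
  apply (diff_bound _ (fun x => (gjl f 1 0 tau x Y - gjl f 1 0 0 x Y) / tau
     - Derive (fun s => gjl f 1 0 s x Y) 0) X h _ Hh).
  - intros x. unfold FOx. apply isd_minus.
    + apply isd_div. apply isd_minus; apply (dx_base 0 0); lia.
    + apply (clair_tx 3 m f Hr ltac:(lia) Hm).
  - intros x Hx. apply ts_fo; [lia|auto|auto|apply (inXY_x X (X + h)); auto; lra].
Qed.

Lemma fo_dy tau X Y h : (1 <= m)%nat -> 0 < h -> 0 < tau -> tau <= 2 * T ->
  inXY X Y -> inXY X (Y + h) -> Rabs (FOy tau X (Y + h) - FOy tau X Y) <= h * (tau / 2 * M).
Proof.
  intros Hm Hh Ht H1 HX1 HX2.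
  apply (diff_bound _ (fun y => (gjl f 0 1 tau X y - gjl f 0 1 0 X y) / tau
     - Derive (fun s => gjl f 0 1 s X y) 0) Y h _ Hh).
  - intros y. unfold FOy. apply isd_minus.
    + apply isd_div. apply isd_minus; apply (dy_base 0); lia.
    + apply (clair_ty 3 m f Hr ltac:(lia) Hm).
  - intros y Hy. apply ts_fo; [lia|auto|auto|apply (inXY_y X Y (Y + h)); auto; lra].
Qed.

Lemma li_dx tau X Y h : (3 <= m)%nat -> 0 < h -> 0 < tau -> tau <= 2 * T ->
  inXY X Y -> inXY (X + h) Y -> Rabs (LIx tau Y (X + h) - LIx tau Y X) <= h * (2 * (tau * M)).
Proof.
  intros Hm Hh Ht H1 HX1 HX2.
  apply (diff_bound _ (fun x => (gjl f 3 0 tau x Y + gjl f 1 2 tau x Y) - (gjl f 3 0 0 x Y + gjl f 1 2 0 x Y)) X h _ Hh).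
  - intros x. unfold LIx. apply isd_minus; apply isd_Lapx; auto.
  - intros x Hx. assert (inXY x Y) by (apply (inXY_x X (X + h)); auto; lra).
    pose proof (ts_lip 3 0 tau x Y ltac:(lia) Ht H1 H).
    pose proof (ts_lip 1 2 tau x Y ltac:(lia) Ht H1 H).
    replace (2 * (tau * M)) with (tau * M + tau * M) by ring.
    eapply Rle_trans; [|apply Rabs_tri2; [exact H0|exact H2]].
    right. f_equal. ring.
Qed.

Lemma li_dy tau X Y h : (3 <= m)%nat -> 0 < h -> 0 < tau -> tau <= 2 * T ->
  inXY X Y -> inXY X (Y + h) -> Rabs (LIy tau X (Y + h) - LIy tau X Y) <= h * (2 * (tau * M)).
Proof.
  intros Hm Hh Ht H1 HX1 HX2.
  apply (diff_bound _ (fun y => (gjl f 2 1 tau X y + gjl f 0 3 tau X y) - (gjl f 2 1 0 X y + gjl f 0 3 0 X y)) Y h _ Hh).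
  - intros y. unfold LIy. apply isd_minus; apply isd_Lapy; auto.
  - intros y Hy. assert (inXY X y) by (apply (inXY_y X Y (Y + h)); auto; lra).
    pose proof (ts_lip 2 1 tau X y ltac:(lia) Ht H1 H).
    pose proof (ts_lip 0 3 tau X y ltac:(lia) Ht H1 H).
    replace (2 * (tau * M)) with (tau * M + tau * M) by ring.
    eapply Rle_trans; [|apply Rabs_tri2; [exact H0|exact H2]].
    right. f_equal. ring.
Qed.

End Gen.
Definition Kf := Kw * (Mpp + M0) * (1 + L + L ^ 2).

Lemma flux_errX t X Y h : 0 <= t <= T -> 0 < h -> h <= L -> amin <= X <= amin + L -> bmin - L <= Y <= bmin + 3 * L ->
  Rabs (flux1 (wX t Y) (vX t Y) X h - Derive (fun s => wX t Y s * Derive (vX t Y) s) X) <= h ^ 2 * Kf.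
Proof.
  intros Ht Hh HhL HX HY. destruct (w_propX t Y Ht) as [Ew Pw]. unfold flux1, Kf.
  apply (stencil_flux _ _ X h L Kw (Mpp + M0)); auto.
  - exact (exn_le _ 5 4 ltac:(lia) (exn_vX t Y)).
  - intros z k Hz Hk. apply Pw; [|lia]. unfold inB, inXY. lra.
  - intros z k Hz Hk. apply Pb_vX; [|lia]. unfold inB, inXY. lra.
Qed.

Lemma flux_errY t X Y h : 0 <= t <= T -> 0 < h -> h <= L -> amin - L <= X <= amin + 3 * L -> bmin <= Y <= bmin + L ->
  Rabs (flux1 (wY t X) (vY t X) Y h - Derive (fun s => wY t X s * Derive (vY t X) s) Y) <= h ^ 2 * Kf.
Proof.
  intros Ht Hh HhL HX HY. destruct (w_propY t X Ht) as [Ew Pw]. unfold flux1, Kf.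
  apply (stencil_flux _ _ Y h L Kw (Mpp + M0)); auto.
  - exact (exn_le _ 5 4 ltac:(lia) (exn_vY t X)).
  - intros z k Hz Hk. apply Pw; [|lia]. unfold inB, inXY. lra.
  - intros z k Hz Hk. apply Pb_vY; [|lia]. unfold inB, inXY. lra.
Qed.

Lemma bound_Rphik t1 tau h X Y : 0 < tau -> 0 <= t1 - tau -> t1 <= T -> tau <= T -> 0 < h -> h <= L ->
  amin <= X <= amin + L -> bmin <= Y <= bmin + L ->
  Rabs (RPhik_real D h tau p0 phi p t1 X Y)
  <= tau ^ 2 * (Mphi + D / 4 * Mphi) + h ^ 2 * (D / 24 * Mphi + 2 * D * Kf).
Proof.
  intros Ht H0 H1 HtT Hh HhL HX HY.
  assert (HXY : forall a b, -L <= a <= L -> -L <= b <= L -> inXY (X + a) (Y + b)) by (intros; unfold inXY; lra).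
  assert (HXY0 : inXY X Y) by (unfold inXY; lra).
  pose proof (ts_ab phi 4 Mphi Hphi HMphi 0 0 t1 tau X Y ltac:(lia) Ht H0 ltac:(lra) HXY0) as A1.
  pose proof (ts_dd phi 4 Mphi Hphi HMphi 2 0 t1 tau X Y ltac:(lia) Ht H0 ltac:(lra) HXY0) as A2x.
  pose proof (ts_dd phi 4 Mphi Hphi HMphi 0 2 t1 tau X Y ltac:(lia) Ht H0 ltac:(lra) HXY0) as A2y.
  pose proof (sp_c2x phi 4 Mphi Hphi HMphi 0 (t1 + tau) X Y h ltac:(lia) Hh ltac:(lra)
    ltac:(replace (X - h) with (X + - h) by ring; replace Y with (Y + 0) by ring; apply HXY; lra)
    ltac:(replace Y with (Y + 0) by ring; apply HXY; lra)) as E2x.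
  pose proof (sp_c2x phi 4 Mphi Hphi HMphi 0 t1 X Y h ltac:(lia) Hh ltac:(lra)
    ltac:(replace (X - h) with (X + - h) by ring; replace Y with (Y + 0) by ring; apply HXY; lra)
    ltac:(replace Y with (Y + 0) by ring; apply HXY; lra)) as E1x.
  pose proof (sp_c2y phi 4 Mphi Hphi HMphi (t1 + tau) X Y h ltac:(lia) Hh ltac:(lra)
    ltac:(replace (Y - h) with (Y + - h) by ring; replace X with (X + 0) by ring; apply HXY; lra)
    ltac:(replace X with (X + 0) by ring; apply HXY; lra)) as E2y.
  pose proof (sp_c2y phi 4 Mphi Hphi HMphi t1 X Y h ltac:(lia) Hh ltac:(lra)
    ltac:(replace (Y - h) with (Y + - h) by ring; replace X with (X + 0) by ring; apply HXY; lra)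
    ltac:(replace X with (X + 0) by ring; apply HXY; lra)) as E1y.
  pose proof (flux_errX t1 X Y h ltac:(lra) Hh HhL HX ltac:(lra)) as G1x.
  pose proof (flux_errY t1 X Y h ltac:(lra) Hh HhL ltac:(lra) HY) as G1y.
  pose proof (flux_errX (t1 - tau) X Y h ltac:(lra) Hh HhL HX ltac:(lra)) as G0x.
  pose proof (flux_errY (t1 - tau) X Y h ltac:(lra) Hh HhL ltac:(lra) HY) as G0y.
  pose proof (pde_phi t1 X Y ltac:(lra) HX HY) as P1.
  pose proof (pde_phi (t1 - tau) X Y ltac:(lra) HX HY) as P0.
  assert (HD0 : 0 <= D) by lra.
  pose proof (scal_between D _ _ HD0 A2x) as A2x'. pose proof (scal_between D _ _ HD0 A2y) as A2y'.
  pose proof (scal_between D _ _ HD0 E2x) as E2x'. pose proof (scal_between D _ _ HD0 E1x) as E1x'.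
  pose proof (scal_between D _ _ HD0 E2y) as E2y'. pose proof (scal_between D _ _ HD0 E1y) as E1y'.
  pose proof (scal_between D _ _ HD0 G1x) as G1x'. pose proof (scal_between D _ _ HD0 G1y) as G1y'.
  pose proof (scal_between D _ _ HD0 G0x) as G0x'. pose proof (scal_between D _ _ HD0 G0y) as G0y'.
  apply Rabs_le_between in A1.
  clear A2x A2y E2x E1x E2y E1y G1x G1y G0x G0y.
  unfold RPhik_real, LAPr, DWGr.
  unfold wX, vX, wY, vY, gjl in *. cbn [iter_op] in *. unfold dT in *.
  apply Rabs_le_between. split; lra.
Qed.

Ltac prep_lra :=
  repeat match goal with
  | H : Rabs _ <= _ |- _ => apply Rabs_le_between in H
  end.

Lemma bound_Rpk t1 tau h X Y : 0 < tau -> 0 <= t1 - tau -> t1 <= T -> tau <= T -> 0 < h -> h <= L ->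
  amin <= X <= amin + L -> bmin <= Y <= bmin + L ->
  Rabs (RPk_real D eta h tau p0 phi p t1 X Y)
  <= tau ^ 2 * (Mpp + eta * D * Mpp) + h ^ 2 * (eta * D / 6 * Mpp).
Proof.
  intros Ht H0 H1 HtT Hh HhL HX HY.
  assert (HXY : forall a b, -L <= a <= L -> -L <= b <= L -> inXY (X + a) (Y + b)) by (intros; unfold inXY; lra).
  assert (HXY0 : inXY X Y) by (unfold inXY; lra).
  pose proof (ts_ab p 5 Mpp Hp HMp 0 0 t1 tau X Y ltac:(lia) Ht H0 ltac:(lra) HXY0) as A1.
  pose proof (ts_dd p 5 Mpp Hp HMp 2 0 t1 tau X Y ltac:(lia) Ht H0 ltac:(lra) HXY0) as A2x.
  pose proof (ts_dd p 5 Mpp Hp HMp 0 2 t1 tau X Y ltac:(lia) Ht H0 ltac:(lra) HXY0) as A2y.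
  pose proof (sp_c2x p 5 Mpp Hp HMp 0 (t1 + tau) X Y h ltac:(lia) Hh ltac:(lra)
    ltac:(replace (X - h) with (X + - h) by ring; replace Y with (Y + 0) by ring; apply HXY; lra)
    ltac:(replace Y with (Y + 0) by ring; apply HXY; lra)) as E2x.
  pose proof (sp_c2x p 5 Mpp Hp HMp 0 t1 X Y h ltac:(lia) Hh ltac:(lra)
    ltac:(replace (X - h) with (X + - h) by ring; replace Y with (Y + 0) by ring; apply HXY; lra)
    ltac:(replace Y with (Y + 0) by ring; apply HXY; lra)) as E1x.
  pose proof (sp_c2y p 5 Mpp Hp HMp (t1 + tau) X Y h ltac:(lia) Hh ltac:(lra)
    ltac:(replace (Y - h) with (Y + - h) by ring; replace X with (X + 0) by ring; apply HXY; lra)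
    ltac:(replace X with (X + 0) by ring; apply HXY; lra)) as E2y.
  pose proof (sp_c2y p 5 Mpp Hp HMp t1 X Y h ltac:(lia) Hh ltac:(lra)
    ltac:(replace (Y - h) with (Y + - h) by ring; replace X with (X + 0) by ring; apply HXY; lra)
    ltac:(replace X with (X + 0) by ring; apply HXY; lra)) as E1y.
  pose proof (pde_p t1 X Y ltac:(lra) ltac:(lra) ltac:(lra)) as P1.
  pose proof (pde_p (t1 - tau) X Y ltac:(lra) ltac:(lra) ltac:(lra)) as P0.
  assert (HD0 : 0 <= eta * D) by nra.
  pose proof (scal_between _ _ _ HD0 A2x) as A2x'. pose proof (scal_between _ _ _ HD0 A2y) as A2y'.
  pose proof (scal_between _ _ _ HD0 E2x) as E2x'. pose proof (scal_between _ _ _ HD0 E1x) as E1x'.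
  pose proof (scal_between _ _ _ HD0 E2y) as E2y'. pose proof (scal_between _ _ _ HD0 E1y) as E1y'.
  clear A2x A2y E2x E1x E2y E1y. prep_lra.
  unfold RPk_real, LAPr.
  unfold gjl in *. cbn [iter_op] in *. unfold dT in *.
  apply Rabs_le_between. split; lra.
Qed.

Ltac inxy HXY := unfold inXY in *; lra.

Lemma bound_Rpk_dx t1 tau h X Y : 0 < tau -> 0 <= t1 - tau -> t1 <= T -> tau <= T -> 0 < h -> h <= L ->
  amin <= X <= amin + L -> bmin <= Y <= bmin + L ->
  Rabs (RPk_real D eta h tau p0 phi p t1 (X + h) Y - RPk_real D eta h tau p0 phi p t1 X Y)
  <= h * (tau ^ 2 * (Mpp + eta * D * Mpp) + h ^ 2 * (eta * D / 6 * Mpp)).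
Proof.
  intros Ht H0 H1 HtT Hh HhL HX HY.
  assert (HXY0 : inXY X Y) by (unfold inXY; lra).
  pose proof (tp1_dx p 5 Mpp Hp HMp t1 tau X Y h ltac:(lia) Hh Ht H0 ltac:(lra) HXY0 ltac:(inxy 0)) as A1.
  pose proof (tp2_dx p 5 Mpp Hp HMp t1 tau X Y h ltac:(lia) Hh Ht H0 ltac:(lra) HXY0 ltac:(inxy 0)) as A2.
  pose proof (sp_dx_x p 5 Mpp Hp HMp (t1 + tau) X Y h ltac:(lia) Hh ltac:(lra) ltac:(inxy 0) ltac:(inxy 0)) as E2x.
  pose proof (sp_dx_x p 5 Mpp Hp HMp t1 X Y h ltac:(lia) Hh ltac:(lra) ltac:(inxy 0) ltac:(inxy 0)) as E1x.
  pose proof (sp_dx_y p 5 Mpp Hp HMp (t1 + tau) X Y h ltac:(lia) Hh ltac:(lra) ltac:(inxy 0) ltac:(inxy 0)) as E2y.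
  pose proof (sp_dx_y p 5 Mpp Hp HMp t1 X Y h ltac:(lia) Hh ltac:(lra) ltac:(inxy 0) ltac:(inxy 0)) as E1y.
  pose proof (pde_p t1 X Y ltac:(lra) ltac:(lra) ltac:(lra)) as P1.
  pose proof (pde_p (t1 - tau) X Y ltac:(lra) ltac:(lra) ltac:(lra)) as P0.
  pose proof (pde_p t1 (X + h) Y ltac:(lra) ltac:(lra) ltac:(lra)) as P1'.
  pose proof (pde_p (t1 - tau) (X + h) Y ltac:(lra) ltac:(lra) ltac:(lra)) as P0'.
  assert (HD0 : 0 <= eta * D) by nra.
  pose proof (scal_between _ _ _ HD0 A2) as A2'.
  pose proof (scal_between _ _ _ HD0 E2x) as E2x'. pose proof (scal_between _ _ _ HD0 E1x) as E1x'.
  pose proof (scal_between _ _ _ HD0 E2y) as E2y'. pose proof (scal_between _ _ _ HD0 E1y) as E1y'.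
  clear A2 E2x E1x E2y E1y. prep_lra.
  unfold RPk_real, LAPr.
  unfold TP1x, TP2x, Lapf, gjl in *. cbn [iter_op] in *. unfold dT in *.
  apply Rabs_le_between. split; lra.
Qed.

Lemma bound_Rpk_dy t1 tau h X Y : 0 < tau -> 0 <= t1 - tau -> t1 <= T -> tau <= T -> 0 < h -> h <= L ->
  amin <= X <= amin + L -> bmin <= Y <= bmin + L ->
  Rabs (RPk_real D eta h tau p0 phi p t1 X (Y + h) - RPk_real D eta h tau p0 phi p t1 X Y)
  <= h * (tau ^ 2 * (Mpp + eta * D * Mpp) + h ^ 2 * (eta * D / 6 * Mpp)).
Proof.
  intros Ht H0 H1 HtT Hh HhL HX HY.
  assert (HXY0 : inXY X Y) by (unfold inXY; lra).
  pose proof (tp1_dy p 5 Mpp Hp HMp t1 tau X Y h ltac:(lia) Hh Ht H0 ltac:(lra) HXY0 ltac:(inxy 0)) as A1.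
  pose proof (tp2_dy p 5 Mpp Hp HMp t1 tau X Y h ltac:(lia) Hh Ht H0 ltac:(lra) HXY0 ltac:(inxy 0)) as A2.
  pose proof (sp_dy_x p 5 Mpp Hp HMp (t1 + tau) X Y h ltac:(lia) Hh ltac:(lra) ltac:(inxy 0) ltac:(inxy 0)) as E2x.
  pose proof (sp_dy_x p 5 Mpp Hp HMp t1 X Y h ltac:(lia) Hh ltac:(lra) ltac:(inxy 0) ltac:(inxy 0)) as E1x.
  pose proof (sp_dy_y p 5 Mpp Hp HMp (t1 + tau) X Y h ltac:(lia) Hh ltac:(lra) ltac:(inxy 0) ltac:(inxy 0)) as E2y.
  pose proof (sp_dy_y p 5 Mpp Hp HMp t1 X Y h ltac:(lia) Hh ltac:(lra) ltac:(inxy 0) ltac:(inxy 0)) as E1y.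
  pose proof (pde_p t1 X Y ltac:(lra) ltac:(lra) ltac:(lra)) as P1.
  pose proof (pde_p (t1 - tau) X Y ltac:(lra) ltac:(lra) ltac:(lra)) as P0.
  pose proof (pde_p t1 X (Y + h) ltac:(lra) ltac:(lra) ltac:(lra)) as P1'.
  pose proof (pde_p (t1 - tau) X (Y + h) ltac:(lra) ltac:(lra) ltac:(lra)) as P0'.
  assert (HD0 : 0 <= eta * D) by nra.
  pose proof (scal_between _ _ _ HD0 A2) as A2'.
  pose proof (scal_between _ _ _ HD0 E2x) as E2x'. pose proof (scal_between _ _ _ HD0 E1x) as E1x'.
  pose proof (scal_between _ _ _ HD0 E2y) as E2y'. pose proof (scal_between _ _ _ HD0 E1y) as E1y'.
  clear A2 E2x E1x E2y E1y. prep_lra.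
  unfold RPk_real, LAPr.
  unfold TP1y, TP2y, Lapf, gjl in *. cbn [iter_op] in *. unfold dT in *.
  apply Rabs_le_between. split; lra.
Qed.

Lemma bound_Rphi0 tau h X Y : 0 < tau -> tau <= T -> 0 < h -> h <= L ->
  amin <= X <= amin + L -> bmin <= Y <= bmin + L ->
  Rabs (RPhi0_real D h tau p0 phi p X Y)
  <= tau * (Mphi / 2 + D / 2 * Mphi) + h ^ 2 * (D / 24 * Mphi + D * Kf).
Proof.
  intros Ht HtT Hh HhL HX HY.
  assert (HXY0 : inXY X Y) by (unfold inXY; lra).
  pose proof (ts_fo phi 4 Mphi Hphi HMphi 0 0 tau X Y ltac:(lia) Ht ltac:(lra) HXY0) as A1.
  pose proof (ts_lip phi 4 Mphi Hphi HMphi 2 0 tau X Y ltac:(lia) Ht ltac:(lra) HXY0) as A2x.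
  pose proof (ts_lip phi 4 Mphi Hphi HMphi 0 2 tau X Y ltac:(lia) Ht ltac:(lra) HXY0) as A2y.
  pose proof (sp_c2x phi 4 Mphi Hphi HMphi 0 tau X Y h ltac:(lia) Hh ltac:(lra) ltac:(inxy 0) ltac:(inxy 0)) as Ex.
  pose proof (sp_c2y phi 4 Mphi Hphi HMphi tau X Y h ltac:(lia) Hh ltac:(lra) ltac:(inxy 0) ltac:(inxy 0)) as Ey.
  pose proof (flux_errX 0 X Y h ltac:(lra) Hh HhL HX ltac:(lra)) as Gx.
  pose proof (flux_errY 0 X Y h ltac:(lra) Hh HhL ltac:(lra) HY) as Gy.
  pose proof (pde_phi 0 X Y ltac:(lra) HX HY) as P0.
  assert (HD0 : 0 <= D) by lra.
  pose proof (scal_between D _ _ HD0 A2x) as A2x'. pose proof (scal_between D _ _ HD0 A2y) as A2y'.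
  pose proof (scal_between D _ _ HD0 Ex) as Ex'. pose proof (scal_between D _ _ HD0 Ey) as Ey'.
  pose proof (scal_between D _ _ HD0 Gx) as Gx'. pose proof (scal_between D _ _ HD0 Gy) as Gy'.
  clear A2x A2y Ex Ey Gx Gy. prep_lra.
  unfold RPhi0_real, LAPr, DWGr.
  unfold wX, vX, wY, vY, gjl in *. cbn [iter_op] in *. unfold dT in *.
  apply Rabs_le_between. split; lra.
Qed.

Lemma bound_Rp0 tau h X Y : 0 < tau -> tau <= T -> 0 < h -> h <= L ->
  amin <= X <= amin + L -> bmin <= Y <= bmin + L ->
  Rabs (RP0_real D eta h tau p0 phi p X Y)
  <= tau * (Mpp / 2 + 2 * eta * D * Mpp) + h ^ 2 * (eta * D / 6 * Mpp).
Proof.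
  intros Ht HtT Hh HhL HX HY.
  assert (HXY0 : inXY X Y) by (unfold inXY; lra).
  pose proof (ts_fo p 5 Mpp Hp HMp 0 0 tau X Y ltac:(lia) Ht ltac:(lra) HXY0) as A1.
  pose proof (ts_lip p 5 Mpp Hp HMp 2 0 tau X Y ltac:(lia) Ht ltac:(lra) HXY0) as A2x.
  pose proof (ts_lip p 5 Mpp Hp HMp 0 2 tau X Y ltac:(lia) Ht ltac:(lra) HXY0) as A2y.
  pose proof (sp_c2x p 5 Mpp Hp HMp 0 tau X Y h ltac:(lia) Hh ltac:(lra) ltac:(inxy 0) ltac:(inxy 0)) as Ex.
  pose proof (sp_c2y p 5 Mpp Hp HMp tau X Y h ltac:(lia) Hh ltac:(lra) ltac:(inxy 0) ltac:(inxy 0)) as Ey.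
  pose proof (pde_p 0 X Y ltac:(lra) ltac:(lra) ltac:(lra)) as P0.
  assert (HD0 : 0 <= eta * D) by nra.
  pose proof (scal_between _ _ _ HD0 A2x) as A2x'. pose proof (scal_between _ _ _ HD0 A2y) as A2y'.
  pose proof (scal_between _ _ _ HD0 Ex) as Ex'. pose proof (scal_between _ _ _ HD0 Ey) as Ey'.
  clear A2x A2y Ex Ey. prep_lra.
  unfold RP0_real, LAPr.
  unfold gjl in *. cbn [iter_op] in *. unfold dT in *.
  apply Rabs_le_between. split; lra.
Qed.

Lemma bound_Rp0_dx tau h X Y : 0 < tau -> tau <= T -> 0 < h -> h <= L ->
  amin <= X <= amin + L -> bmin <= Y <= bmin + L ->
  Rabs (RP0_real D eta h tau p0 phi p (X + h) Y - RP0_real D eta h tau p0 phi p X Y)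
  <= h * (tau * (Mpp / 2 + 2 * eta * D * Mpp) + h ^ 2 * (eta * D / 6 * Mpp)).
Proof.
  intros Ht HtT Hh HhL HX HY.
  assert (HXY0 : inXY X Y) by (unfold inXY; lra).
  pose proof (fo_dx p 5 Mpp Hp HMp tau X Y h ltac:(lia) Hh Ht ltac:(lra) HXY0 ltac:(inxy 0)) as A1.
  pose proof (li_dx p 5 Mpp Hp HMp tau X Y h ltac:(lia) Hh Ht ltac:(lra) HXY0 ltac:(inxy 0)) as A2.
  pose proof (sp_dx_x p 5 Mpp Hp HMp tau X Y h ltac:(lia) Hh ltac:(lra) ltac:(inxy 0) ltac:(inxy 0)) as Ex.
  pose proof (sp_dx_y p 5 Mpp Hp HMp tau X Y h ltac:(lia) Hh ltac:(lra) ltac:(inxy 0) ltac:(inxy 0)) as Ey.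
  pose proof (pde_p 0 X Y ltac:(lra) ltac:(lra) ltac:(lra)) as P0.
  pose proof (pde_p 0 (X + h) Y ltac:(lra) ltac:(lra) ltac:(lra)) as P0'.
  assert (HD0 : 0 <= eta * D) by nra.
  pose proof (scal_between _ _ _ HD0 A2) as A2'.
  pose proof (scal_between _ _ _ HD0 Ex) as Ex'. pose proof (scal_between _ _ _ HD0 Ey) as Ey'.
  clear A2 Ex Ey. prep_lra.
  unfold RP0_real, LAPr.
  unfold FOx, LIx, Lapf, gjl in *. cbn [iter_op] in *. unfold dT in *.
  apply Rabs_le_between. split; lra.
Qed.

Lemma bound_Rp0_dy tau h X Y : 0 < tau -> tau <= T -> 0 < h -> h <= L ->
  amin <= X <= amin + L -> bmin <= Y <= bmin + L ->
  Rabs (RP0_real D eta h tau p0 phi p X (Y + h) - RP0_real D eta h tau p0 phi p X Y)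
  <= h * (tau * (Mpp / 2 + 2 * eta * D * Mpp) + h ^ 2 * (eta * D / 6 * Mpp)).
Proof.
  intros Ht HtT Hh HhL HX HY.
  assert (HXY0 : inXY X Y) by (unfold inXY; lra).
  pose proof (fo_dy p 5 Mpp Hp HMp tau X Y h ltac:(lia) Hh Ht ltac:(lra) HXY0 ltac:(inxy 0)) as A1.
  pose proof (li_dy p 5 Mpp Hp HMp tau X Y h ltac:(lia) Hh Ht ltac:(lra) HXY0 ltac:(inxy 0)) as A2.
  pose proof (sp_dy_x p 5 Mpp Hp HMp tau X Y h ltac:(lia) Hh ltac:(lra) ltac:(inxy 0) ltac:(inxy 0)) as Ex.
  pose proof (sp_dy_y p 5 Mpp Hp HMp tau X Y h ltac:(lia) Hh ltac:(lra) ltac:(inxy 0) ltac:(inxy 0)) as Ey.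
  pose proof (pde_p 0 X Y ltac:(lra) ltac:(lra) ltac:(lra)) as P0.
  pose proof (pde_p 0 X (Y + h) ltac:(lra) ltac:(lra) ltac:(lra)) as P0'.
  assert (HD0 : 0 <= eta * D) by nra.
  pose proof (scal_between _ _ _ HD0 A2) as A2'.
  pose proof (scal_between _ _ _ HD0 Ex) as Ex'. pose proof (scal_between _ _ _ HD0 Ey) as Ey'.
  clear A2 Ex Ey. prep_lra.
  unfold RP0_real, LAPr.
  unfold FOy, LIy, Lapf, gjl in *. cbn [iter_op] in *. unfold dT in *.
  apply Rabs_le_between. split; lra.
Qed.

Lemma comb_le a b x y : 0 <= a -> 0 <= b -> 0 <= x -> 0 <= y -> x * a + y * b <= (a + b) * (x + y).
Proof. intros. nra. Qed.

Lemma main_bounds : exists C, forall (N : nat) (tau : R), (1 <= N)%nat -> 0 < tau ->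
  let h := L / INR N in
  (forall k : nat, INR k <= T / tau - 1 ->
     normL2 N h (Rphik D amin bmin h tau p0 phi p (S k))
     + normH1 N h (Rpk D eta amin bmin h tau p0 phi p (S k)) <= C * (tau ^ 2 + h ^ 2)) /\
  (tau <= T ->
     normL2 N h (Rphi0 D amin bmin h tau p0 phi p)
     + normH1 N h (Rp0 D eta amin bmin h tau p0 phi p) <= C * (tau + h ^ 2)).
Proof.
  assert (HB0 : inB 0 amin bmin) by (unfold inB, inXY; lra).
  assert (Mphi0 : 0 <= Mphi) by (pose proof (HMphi 0 0 0 0 amin bmin ltac:(lia) ltac:(lia) HB0); pose proof (Rabs_pos (mixed 0 0 0 phi 0 amin bmin)); lra).
  assert (Mpp0 : 0 <= Mpp) by (pose proof (HMp 0 0 0 0 amin bmin ltac:(lia) ltac:(lia) HB0); pose proof (Rabs_pos (mixed 0 0 0 p 0 amin bmin)); lra).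
  assert (M00 : 0 <= M0) by (pose proof (HM0 0 0 0 amin bmin ltac:(lia) HB0); pose proof (Rabs_pos (mixed 0 0 0 P0f 0 amin bmin)); lra).
  assert (Kw0 : 0 <= Kw).
  { unfold Kw. pose proof (Kinv_pos 3 mp (Mpp + M0) Hmp). apply Rmult_le_pos; [apply Rmult_le_pos|]; lra. }
  assert (Kf0 : 0 <= Kf).
  { unfold Kf. apply Rmult_le_pos; [apply Rmult_le_pos|]; try lra. pose proof (pow2_ge_0 L). lra. }
  assert (ED : 0 <= eta * D) by nra.
  set (a1 := Mphi + D / 4 * Mphi). set (b1 := D / 24 * Mphi + 2 * D * Kf).
  set (a2 := Mpp + eta * D * Mpp). set (b2 := eta * D / 6 * Mpp).
  set (a3 := Mphi / 2 + D / 2 * Mphi). set (b3 := D / 24 * Mphi + D * Kf).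
  set (a4 := Mpp / 2 + 2 * eta * D * Mpp). set (b4 := eta * D / 6 * Mpp).
  assert (Ha1 : 0 <= a1) by (unfold a1; nra). assert (Hb1 : 0 <= b1) by (unfold b1; nra).
  assert (Ha2 : 0 <= a2) by (unfold a2; nra). assert (Hb2 : 0 <= b2) by (unfold b2; nra).
  assert (Ha3 : 0 <= a3) by (unfold a3; nra). assert (Hb3 : 0 <= b3) by (unfold b3; nra).
  assert (Ha4 : 0 <= a4) by (unfold a4; nra). assert (Hb4 : 0 <= b4) by (unfold b4; nra).
  exists (L * ((a1 + b1) + 3 * (a2 + b2) + (a3 + b3) + 3 * (a4 + b4))).
  intros N tau HN Ht h.
  assert (HN0 : 0 < INR N) by (apply lt_0_INR; lia).
  assert (HN1 : 1 <= INR N) by (apply (le_INR 1 N); lia).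
  assert (Hh : 0 < h) by (unfold h; apply Rdiv_lt_0_compat; lra).
  assert (HNh : INR N * h = L) by (unfold h; field; lra).
  assert (HhL : h <= L) by (rewrite <- HNh; nra).
  assert (Hh0 : h <> 0) by lra.
  assert (Hgx : forall a, (1 <= a <= N)%nat -> amin <= amin + IZR (Z.of_nat a) * h <= amin + L).
  { intros a Ha. rewrite <- HNh. apply grid_pt; auto; lra. }
  assert (Hgy : forall b, (1 <= b <= N)%nat -> bmin <= bmin + IZR (Z.of_nat b) * h <= bmin + L).
  { intros b Hb. rewrite <- HNh. apply grid_pt; auto; lra. }
  assert (Sx : forall z, amin + IZR (z + 1) * h = amin + IZR z * h + h) by (intros; rewrite plus_IZR; ring).
  assert (Sy : forall z, bmin + IZR (z + 1) * h = bmin + IZR z * h + h) by (intros; rewrite plus_IZR; ring).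
  assert (Htau2 : 0 <= tau ^ 2) by (apply pow_le; lra).
  assert (Hh2 : 0 <= h ^ 2) by (apply pow_le; lra).
  split.
  - intros k Hk.
    assert (Hk0 : 0 <= INR k) by apply pos_INR.
    assert (HtT : tau <= T).
    { assert (1 <= T / tau) by lra. apply Rmult_le_compat_r with (r := tau) in H; [|lra].
      unfold Rdiv in H. rewrite Rmult_assoc, Rinv_l, Rmult_1_r in H by lra. lra. }
    set (t1 := tk tau (S k)).
    assert (Ht1 : t1 <= T).
    { unfold t1, tk. rewrite S_INR. assert (INR k + 1 <= T / tau) by lra.
      apply Rmult_le_compat_r with (r := tau) in H; [|lra].
      unfold Rdiv in H. rewrite Rmult_assoc, Rinv_l, Rmult_1_r in H by lra. lra. }
    assert (Ht0 : 0 <= t1 - tau) by (unfold t1, tk; rewrite S_INR; nra).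
    assert (B1 := normL2_bound N h (Rphik D amin bmin h tau p0 phi p (S k)) (tau ^ 2 * a1 + h ^ 2 * b1) Hh ltac:(nra)).
    lapply B1; [clear B1; intro B1|].
    2:{ intros a b Ha Hb. rewrite Rphik_eq by auto. apply bound_Rphik; auto. }
    assert (B2 := normH1_bound N h (Rpk D eta amin bmin h tau p0 phi p (S k))
       (tau ^ 2 * a2 + h ^ 2 * b2) (tau ^ 2 * a2 + h ^ 2 * b2) (tau ^ 2 * a2 + h ^ 2 * b2) Hh ltac:(nra) ltac:(nra) ltac:(nra)).
    lapply B2; [clear B2; intro B2|].
    2:{ intros a b Ha Hb. rewrite Rpk_eq by auto. apply bound_Rpk; auto. }
    lapply B2; [clear B2; intro B2|].
    2:{ intros a b Ha Hb. unfold Dxg. rewrite !Rpk_eq by auto. rewrite Sx.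
        apply Rabs_le_div; auto. eapply Rle_trans; [apply bound_Rpk_dx; auto|right; unfold a2, b2; ring]. }
    lapply B2; [clear B2; intro B2|].
    2:{ intros a b Ha Hb. unfold Dyg. rewrite !Rpk_eq by auto. rewrite Sy.
        apply Rabs_le_div; auto. eapply Rle_trans; [apply bound_Rpk_dy; auto|right; unfold a2, b2; ring]. }
    rewrite HNh in B1, B2.
    pose proof (comb_le a1 b1 (tau ^ 2) (h ^ 2) Ha1 Hb1 Htau2 Hh2).
    pose proof (comb_le a2 b2 (tau ^ 2) (h ^ 2) Ha2 Hb2 Htau2 Hh2).
    assert (0 <= (a3 + b3 + 3 * (a4 + b4)) * (tau ^ 2 + h ^ 2)) by (apply Rmult_le_pos; lra).
    nra.
  - intros HtT.
    assert (B1 := normL2_bound N h (Rphi0 D amin bmin h tau p0 phi p) (tau * a3 + h ^ 2 * b3) Hh ltac:(nra)).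
    lapply B1; [clear B1; intro B1|].
    2:{ intros a b Ha Hb. rewrite Rphi0_eq by auto. apply bound_Rphi0; auto. }
    assert (B2 := normH1_bound N h (Rp0 D eta amin bmin h tau p0 phi p)
       (tau * a4 + h ^ 2 * b4) (tau * a4 + h ^ 2 * b4) (tau * a4 + h ^ 2 * b4) Hh ltac:(nra) ltac:(nra) ltac:(nra)).
    lapply B2; [clear B2; intro B2|].
    2:{ intros a b Ha Hb. rewrite Rp0_eq by auto. apply bound_Rp0; auto. }
    lapply B2; [clear B2; intro B2|].
    2:{ intros a b Ha Hb. unfold Dxg. rewrite !Rp0_eq by auto. rewrite Sx.
        apply Rabs_le_div; auto. eapply Rle_trans; [apply bound_Rp0_dx; auto|right; unfold a4, b4; ring]. }
    lapply B2; [clear B2; intro B2|].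
    2:{ intros a b Ha Hb. unfold Dyg. rewrite !Rp0_eq by auto. rewrite Sy.
        apply Rabs_le_div; auto. eapply Rle_trans; [apply bound_Rp0_dy; auto|right; unfold a4, b4; ring]. }
    rewrite HNh in B1, B2.
    pose proof (comb_le a3 b3 tau (h ^ 2) Ha3 Hb3 ltac:(lra) Hh2).
    pose proof (comb_le a4 b4 tau (h ^ 2) Ha4 Hb4 ltac:(lra) Hh2).
    assert (0 <= (a1 + b1 + 3 * (a2 + b2)) * (tau + h ^ 2)) by (apply Rmult_le_pos; lra).
    nra.
Qed.

End Main.


Theorem lemma3p2 :
  forall (L amin bmin D eta T mp Mp : R) (p0 : R -> R -> R) (phi p : fun3),
    0 < L -> 0 < D -> 0 < eta -> 0 < T -> 0 < mp ->
    smooth_per2 L p0 ->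
    (forall x y, mp <= p0 x y <= Mp) ->
    regular 3 4 phi -> periodic3 L phi ->
    regular 3 5 p -> periodic3 L p ->
    (forall t x y, 0 <= t <= T -> 0 <= phi t x y /\ 0 <= p t x y) ->
    solves_system D eta T amin bmin L p0 phi p ->
    exists C : R, forall (N : nat) (tau : R),
      (1 <= N)%nat -> 0 < tau ->
      let h := L / INR N in
      (forall k : nat, INR k <= T / tau - 1 ->
         normL2 N h (Rphik D amin bmin h tau p0 phi p (S k))
         + normH1 N h (Rpk D eta amin bmin h tau p0 phi p (S k))
         <= C * (tau ^ 2 + h ^ 2)) /\
      (tau <= T ->
         normL2 N h (Rphi0 D amin bmin h tau p0 phi p)
         + normH1 N h (Rp0 D eta amin bmin h tau p0 phi p)
         <= C * (tau + h ^ 2)).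
Proof.
  intros L amin bmin D eta T mp Mp p0 phi p HL HD Heta HT Hmp [Hp0r Hp0per] Hb Hphi Hphiper Hp Hpper Hnn Hsol.
  destruct (mixed_bound 3 4 phi 0 (2 * T) (amin - L) (amin + 3 * L) (bmin - L) (bmin + 3 * L) Hphi) as [Mphi HMphi].
  destruct (mixed_bound 3 5 p 0 (2 * T) (amin - L) (amin + 3 * L) (bmin - L) (bmin + 3 * L) Hp) as [Mpp HMp].
  destruct (mixed_bound 0 5 (P0f p0) 0 (2 * T) (amin - L) (amin + 3 * L) (bmin - L) (bmin + 3 * L) (Hp0r 5%nat)) as [M0 HM0].
  apply (main_bounds L amin bmin D eta T mp p0 phi p HL HD Heta HT Hmp Hp0r (fun x y => proj1 (Hb x y))
           Hphi Hp Hpper Hphiper Hp0per Hnn Hsol Mphi Mpp M0).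
  - intros i j l t x y Hi Hjl [Ht [Hx Hy]]. apply HMphi; auto.
  - intros i j l t x y Hi Hjl [Ht [Hx Hy]]. apply HMp; auto.
  - intros j l t x y Hjl [Ht [Hx Hy]]. apply (HM0 0%nat j l); auto.
Qed.
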